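(* For every $k\ge3$, the distribution $P_{k\text{-NAE}}$ satisfies the conditions SYM, BAL, MIN, POS and UNI.
   Context: $\Omega=\{-1,1\}$, $q=2$. For $\tau\in\Omega^k$ let $\psi_\tau:\Omega^k\to\{0,1\}$, $\psi_\tau(\sigma)=1-\mathbf 1\{\sigma=\tau\}-\mathbf 1\{\sigma=-\tau\}$; $\Psi_{k\text{-NAE}}=\{\psi_\tau:\tau\in\Omega^k\}$ and $P_{k\text{-NAE}}$ is the uniform distribution on these $2^k$ functions. $\boldsymbol\psi$ denotes a sample from $P=P_{k\text{-NAE}}$ and $\xi=q^{-k}\sum_{\sigma\in\Omega^k}\mathbb E[\boldsymbol\psi(\sigma)]$; $\psi^\theta(\sigma)=\psi(\sigma_{\theta(1)},\dots,\sigma_{\theta(k)})$. SYM: for all $i\in[k]$, $\omega\in\Omega$, $\psi\in\Psi$, $\sum_{\tau\in\Omega^k}\mathbf 1\{\tau_i=\omega\}\psi(\tau)=q^{k-1}\xi$, and $P(\psi)=P(\psi^\theta)$ for every permutation $\theta$ of $[k]$. BAL: $\phi(\mu)=\sum_{\tau\in\Omega^k}\mathbb E[\boldsymbol\psi(\tau)]\prod_{i=1}^k\mu(\tau_i)$ is concave on the distributions $\mu$ on $\Omega$ and attains its maximum at the uniform distribution. MIN: among distributions $\rho$ on $\Omega\times\Omega$ with $\sum_s\rho(s,t)=\sum_s\rho(t,s)=1/q$ for all $t$, $\varphi(\rho)=\sum_{\sigma,\tau\in\Omega^k}\mathbb E[\boldsymbol\psi(\sigma)\boldsymbol\psi(\tau)]\prod_{i=1}^k\rho(\sigma_i,\tau_i)$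 has the uniform distribution as unique global minimiser. POS: for all probability measures $\pi,\pi'$ on the distributions on $\Omega$ with $\int\mu(\omega)d\pi(\mu)=\int\mu(\omega)d\pi'(\mu)=1/q$ for all $\omega$, and all $\ell\ge2$, with $\rho_i$ i.i.d. from $\pi$, $\rho'_i$ i.i.d. from $\pi'$, $\boldsymbol\psi$ from $P$, all independent, $\mathbb E[(1-\sum_\tau\boldsymbol\psi(\tau)\prod_{i=1}^k\rho_i(\tau_i))^\ell+(k-1)(1-\sum_\tau\boldsymbol\psi(\tau)\prod_{i=1}^k\rho'_i(\tau_i))^\ell-k(1-\sum_\tau\boldsymbol\psi(\tau)\rho_1(\tau_1)\prod_{i=2}^k\rho'_i(\tau_i))^\ell]\ge0$. UNI: every CSP with constraint functions from $\Psi$ (each constraint $a$ having a $k$-tuple $\partial a$ of variables) in which each constraint has pairwise distinct variables and whose bipartite variable–constraint graph is unicyclic admits $\sigma$ with $\prod_a\psi_a(\sigma(\partial a))>0$. *)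

(* Defs.v *)
From Stdlib Require Import Reals Lra Arith List.
Import ListNotations.
Open Scope R_scope.

(** Omega = {-1,1} is encoded by bool: true <-> 1, false <-> -1,
    so that negation (sigma |-> -sigma) is [negb].  Omega^k is the set of
    lists of length k; [cube k] enumerates it (without repetition). *)
Definition Omega := bool.

Fixpoint cube (k : nat) : list (list Omega) :=
  match k with
  | O => [nil]
  | S k' => map (cons true) (cube k') ++ map (cons false) (cube k')
  end.

Definition sumR {A : Type} (f : A -> R) (l : list A) : R :=
  fold_right (fun x acc => f x + acc) 0 l.
Definition prodR {A : Type} (f : A -> R) (l : list A) : R :=
  fold_right (fun x acc => f x * acc) 1 l.

Definition psi (tau sigma : list Omega) : R :=
  (1 - (if list_eq_dec Bool.bool_dec sigma tau then 1 else 0)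
     - (if list_eq_dec Bool.bool_dec sigma (map negb tau) then 1 else 0))%R.

(** Expectation over psi ~ P_{k-NAE} (uniform over the 2^k indices tau). *)
Definition Epsi (k : nat) (g : (list Omega -> R) -> R) : R :=
  / 2 ^ k * sumR (fun tau => g (psi tau)) (cube k).

Definition xi (k : nat) : R :=
  / 2 ^ k * sumR (fun sigma => Epsi k (fun ps => ps sigma)) (cube k).

Definition agree (k : nat) (f g : list Omega -> R) : bool :=
  forallb (fun s => if Req_EM_T (f s) (g s) then true else false) (cube k).

Definition Pmass (k : nat) (f : list Omega -> R) : R :=
  / 2 ^ k * sumR (fun tau => if agree k (psi tau) f then 1 else 0) (cube k).

(** Permutations of [k] = {0,...,k-1} (0-based indices). *)
Definition is_perm (k : nat) (theta : nat -> nat) : Prop :=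
  (forall i, (i < k)%nat -> (theta i < k)%nat) /\
  (forall i j, (i < k)%nat -> (j < k)%nat -> theta i = theta j -> i = j).

Definition permute (k : nat) (theta : nat -> nat) (f : list Omega -> R)
  : list Omega -> R :=
  fun sigma => f (map (fun i => nth (theta i) sigma true) (seq 0 k)).

Definition SYM (k : nat) : Prop :=
  (forall (i : nat) (w : Omega) (tau0 : list Omega),
      (i < k)%nat -> length tau0 = k ->
      sumR (fun tau => if Bool.eqb (nth i tau true) w then psi tau0 tau else 0)
           (cube k)
      = 2 ^ (k - 1) * xi k)
  /\
  (forall (theta : nat -> nat) (tau0 : list Omega),
      is_perm k theta -> length tau0 = k ->
      Pmass k (psi tau0) = Pmass k (permute k theta (psi tau0))).

Definition is_dist (mu : Omega -> R) : Prop :=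
  (forall w, 0 <= mu w) /\ mu true + mu false = 1.

Definition phi (k : nat) (mu : Omega -> R) : R :=
  sumR (fun tau => Epsi k (fun ps => ps tau) * prodR mu tau) (cube k).

Definition BAL (k : nat) : Prop :=
  (forall (mu1 mu2 : Omega -> R) (t : R),
      is_dist mu1 -> is_dist mu2 -> 0 <= t <= 1 ->
      t * phi k mu1 + (1 - t) * phi k mu2
        <= phi k (fun w => t * mu1 w + (1 - t) * mu2 w))
  /\
  (forall mu : Omega -> R, is_dist mu -> phi k mu <= phi k (fun _ => / 2)).

Definition is_coupling (rho : Omega -> Omega -> R) : Prop :=
  (forall s t, 0 <= rho s t) /\
  rho true true + rho true false + rho false true + rho false false = 1 /\
  (forall t, rho true t + rho false t = / 2) /\
  (forall t, rho t true + rho t false = / 2).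

Definition varphi (k : nat) (rho : Omega -> Omega -> R) : R :=
  sumR (fun sigma =>
    sumR (fun tau =>
       Epsi k (fun ps => ps sigma * ps tau)
       * prodR (fun p => rho (fst p) (snd p)) (combine sigma tau))
    (cube k)) (cube k).

Definition MIN (k : nat) : Prop :=
  forall rho : Omega -> Omega -> R,
    is_coupling rho ->
    (forall s t, rho s t = / 4) \/ varphi k (fun _ _ => / 4) < varphi k rho.

(** A distribution mu on Omega is determined by x = mu(1) in [0,1];
    [mu_of x] is the corresponding distribution.  A (Borel) probability
    measure pi on this simplex is represented by its integration functional
    on continuous functions (Riesz representation): a positive, normalised
    linear functional on C([0,1]), only depending on values on [0,1].
    (Its value on non-continuous arguments is irrelevant / unconstrained.) *)
Definition mu_of (x : R) : Omega -> R := fun w => if w then x else 1 - x.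

Record PMeas : Type := {
  pint : (R -> R) -> R;
  pint_lin : forall (f g : R -> R) (a b : R), continuity f -> continuity g ->
      pint (fun x => a * f x + b * g x) = a * pint f + b * pint g;
  pint_pos : forall f : R -> R, continuity f ->
      (forall x, 0 <= x <= 1 -> 0 <= f x) -> 0 <= pint f;
  pint_one : pint (fun _ => 1) = 1;
  pint_local : forall f g : R -> R,
      (forall x, 0 <= x <= 1 -> f x = g x) -> pint f = pint g
}.

(** Expectation of F(x_1,...,x_n) for independent x_i ~ Is_i
    (iterated integration = integration against the product measure). *)
Fixpoint iterI (Is : list ((R -> R) -> R)) (F : list R -> R) : R :=
  match Is with
  | nil => F nil
  | I0 :: rest => I0 (fun x => iterI rest (fun xs => F (x :: xs)))
  end.

Definition Wt (k : nat) (ps : list Omega -> R) (xs : list R) : R :=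
  sumR (fun tau =>
     ps tau * prodR (fun p => mu_of (snd p) (fst p)) (combine tau xs)) (cube k).

(** Variables: ys = [x_1;...;x_k; x'_1;...;x'_k] with rho_i = mu_of x_i,
    rho'_i = mu_of x'_i. *)
Definition POS_integrand (k l : nat) (ps : list Omega -> R) (ys : list R) : R :=
  let r := firstn k ys in
  let r' := skipn k ys in
  (1 - Wt k ps r) ^ l
  + (INR k - 1) * (1 - Wt k ps r') ^ l
  - INR k * (1 - Wt k ps (nth 0 r 0 :: skipn 1 r')) ^ l.

Definition POS (k : nat) : Prop :=
  forall (pi pi' : PMeas) (l : nat),
    (forall w, pint pi (fun x => mu_of x w) = / 2) ->
    (forall w, pint pi' (fun x => mu_of x w) = / 2) ->
    (2 <= l)%nat ->
    0 <= Epsi k (fun ps =>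
           iterI (repeat (pint pi) k ++ repeat (pint pi') k)
                 (POS_integrand k l ps)).

Record constraint : Type := { ctau : list Omega; cvars : list nat }.

(** A CSP on variables 0..n-1 with constraints [cs]; constraint a has
    function psi_{ctau a} in Psi_{k-NAE} and variable tuple cvars a. *)
Definition csp_wf (k n : nat) (cs : list constraint) : Prop :=
  forall c, In c cs ->
    length (ctau c) = k /\ length (cvars c) = k /\ NoDup (cvars c) /\
    (forall x, In x (cvars c) -> (x < n)%nat).

Inductive vertex : Type := VVar (i : nat) | VCon (a : nat).

Definition vvalid (n : nat) (cs : list constraint) (v : vertex) : Prop :=
  match v with
  | VVar i => (i < n)%nat
  | VCon a => (a < length cs)%nat
  end.

Definition adj (cs : list constraint) (v w : vertex) : Prop :=
  match v, w with
  | VVar i, VCon a | VCon a, VVar i =>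
      exists c, nth_error cs a = Some c /\ In i (cvars c)
  | _, _ => False
  end.

Fixpoint walk (cs : list constraint) (u : vertex) (p : list vertex) (v : vertex)
  : Prop :=
  match p with
  | nil => u = v
  | w :: p' => adj cs u w /\ walk cs w p' v
  end.

Definition connected (n : nat) (cs : list constraint) : Prop :=
  forall u v, vvalid n cs u -> vvalid n cs v -> exists p, walk cs u p v.

Definition is_cycle (cs : list constraint) (c : list vertex) : Prop :=
  (3 <= length c)%nat /\ NoDup c /\
  forall i, (i < length c)%nat ->
    adj cs (nth i c (VVar 0)) (nth (S i mod length c) c (VVar 0)).

Definition cycle_edge (c : list vertex) (u v : vertex) : Prop :=
  exists i, (i < length c)%nat /\
    ((nth i c (VVar 0) = u /\ nth (S i mod length c) c (VVar 0) = v) \/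
     (nth i c (VVar 0) = v /\ nth (S i mod length c) c (VVar 0) = u)).

(** Unicyclic: connected, with exactly one cycle (cycles identified with
    their edge sets). *)
Definition unicyclic (n : nat) (cs : list constraint) : Prop :=
  connected n cs /\
  exists c, is_cycle cs c /\
    forall c', is_cycle cs c' -> forall u v, cycle_edge c' u v <-> cycle_edge c u v.

Definition UNI (k : nat) : Prop :=
  forall (n : nat) (cs : list constraint),
    csp_wf k n cs -> unicyclic n cs ->
    exists sigma : nat -> Omega,
      0 < prodR (fun c => psi (ctau c) (map sigma (cvars c))) cs.

(* Main.v *)
Require Import Defs.
From Stdlib Require Import Reals Arith List Lra Lia Classical.
Import ListNotations.
Open Scope R_scope.

Notation eqL := (list_eq_dec Bool.bool_dec).

Lemma sumR_cons {A} (f : A -> R) x l : sumR f (x :: l) = f x + sumR f l.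
Proof. reflexivity. Qed.
Lemma sumR_nil {A} (f : A -> R) : sumR f nil = 0.
Proof. reflexivity. Qed.
Lemma sumR_app {A} (f : A -> R) l1 l2 : sumR f (l1 ++ l2) = sumR f l1 + sumR f l2.
Proof. induction l1; simpl; [lra|]. unfold sumR in *; simpl; rewrite IHl1; lra. Qed.
Lemma sumR_map {A B} (g : A -> B) (f : B -> R) l :
  sumR f (map g l) = sumR (fun x => f (g x)) l.
Proof. induction l; simpl; auto. unfold sumR in *; simpl; rewrite IHl; lra. Qed.
Lemma sumR_ext_in {A} (f g : A -> R) l :
  (forall x, In x l -> f x = g x) -> sumR f l = sumR g l.
Proof.
  induction l; intros H; [reflexivity|].
  rewrite !sumR_cons. rewrite H by (left; auto). rewrite IHl; auto.
  intros; apply H; right; auto.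
Qed.
Lemma sumR_ext {A} (f g : A -> R) l :
  (forall x, f x = g x) -> sumR f l = sumR g l.
Proof. intros; apply sumR_ext_in; auto. Qed.
Lemma sumR_plus {A} (f g : A -> R) l :
  sumR (fun x => f x + g x) l = sumR f l + sumR g l.
Proof. induction l; [simpl; lra|]. rewrite !sumR_cons, IHl; lra. Qed.
Lemma sumR_minus {A} (f g : A -> R) l :
  sumR (fun x => f x - g x) l = sumR f l - sumR g l.
Proof. induction l; [simpl; lra|]. rewrite !sumR_cons, IHl; lra. Qed.
Lemma sumR_scal {A} c (f : A -> R) l :
  sumR (fun x => c * f x) l = c * sumR f l.
Proof. induction l; [simpl; lra|]. rewrite !sumR_cons, IHl; lra. Qed.
Lemma sumR_zero {A} (l : list A) : sumR (fun _ => 0) l = 0.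
Proof. induction l; [reflexivity|]. rewrite sumR_cons, IHl; lra. Qed.
Lemma sumR_nonneg {A} (f : A -> R) l : (forall x, In x l -> 0 <= f x) -> 0 <= sumR f l.
Proof.
  induction l; intros H; [simpl; lra|]. rewrite sumR_cons.
  assert (0 <= f a) by (apply H; left; auto).
  assert (0 <= sumR f l) by (apply IHl; intros; apply H; right; auto). lra.
Qed.

Lemma sumR_indicator {A} (dec : forall x y : A, {x = y} + {x <> y}) (a : A) l c :
  NoDup l -> In a l -> sumR (fun x => if dec x a then c else 0) l = c.
Proof.
  induction l as [|b l IH]; intros Hnd Hin; [destruct Hin|].
  inversion Hnd; subst. rewrite sumR_cons.
  destruct (dec b a) as [e|ne].
  - subst. rewrite sumR_ext_in with (g := fun _ => 0). rewrite sumR_zero; lra.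
    intros x Hx. destruct (dec x a); auto. subst; contradiction.
  - destruct Hin as [e|Hin]; [congruence|]. rewrite IH; auto; lra.
Qed.

Lemma sumR_indicator_out {A} (dec : forall x y : A, {x = y} + {x <> y}) (a : A) l c :
  ~ In a l -> sumR (fun x => if dec x a then c else 0) l = 0.
Proof.
  induction l as [|b l IH]; intros Hin; [reflexivity|].
  rewrite sumR_cons. destruct (dec b a). subst; exfalso; apply Hin; left; auto.
  rewrite IH. lra. intro; apply Hin; right; auto.
Qed.

Lemma cube_S (f : list Omega -> R) k :
  sumR f (cube (S k)) = sumR (fun t : list Omega => f (true :: t)) (cube k) + sumR (fun t : list Omega => f (false :: t)) (cube k).
Proof. simpl. rewrite sumR_app, !sumR_map. reflexivity. Qed.

Lemma cube_length k l : In l (cube k) -> length l = k.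
Proof.
  revert l; induction k; simpl; intros l H.
  - destruct H as [<-|[]]; reflexivity.
  - apply in_app_or in H. destruct H as [H|H]; apply in_map_iff in H;
    destruct H as [t [<- Ht]]; simpl; rewrite IHk; auto.
Qed.

Lemma cube_complete k l : length l = k -> In l (cube k).
Proof.
  revert l; induction k; intros l H.
  - destruct l; [left; auto| discriminate].
  - destruct l as [|b l]; [discriminate|]. simpl in H. simpl.
    apply in_or_app. destruct b; [left|right]; apply in_map; apply IHk; lia.
Qed.

Lemma cube_NoDup k : NoDup (cube k).
Proof.
  induction k; simpl. constructor; [intros []|constructor].
  apply NoDup_app.
  - apply NoDup_map_NoDup_ForallPairs; auto. intros x y _ _ H; inversion H; auto.
  - apply NoDup_map_NoDup_ForallPairs; auto. intros x y _ _ H; inversion H; auto.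
  - intros x H1 H2. apply in_map_iff in H1, H2.
    destruct H1 as [? [<- _]]; destruct H2 as [? [E _]]; discriminate.
Qed.




Lemma cube_count k : sumR (fun _ => 1) (cube k) = 2 ^ k.
Proof. induction k; [simpl; lra|]. rewrite cube_S, IHk; simpl; lra. Qed.

Lemma map_negb_invol (l : list bool) : map negb (map negb l) = l.
Proof. induction l; simpl; auto. rewrite IHl, Bool.negb_involutive; auto. Qed.

Lemma length_map_negb l : length (map negb l) = length l.
Proof. apply length_map. Qed.

Lemma if_iff {P Q : Prop} (dp : {P} + {~P}) (dq : {Q} + {~Q}) (a b : R) :
  (P <-> Q) -> (if dp then a else b) = (if dq then a else b).
Proof. intros H; destruct dp, dq; tauto. Qed.

Lemma sum_ind_cube k a c : length a = k ->
  sumR (fun x => if eqL x a then c else 0) (cube k) = c.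
Proof. intros; apply sumR_indicator; [apply cube_NoDup|apply cube_complete; auto]. Qed.

Lemma sum_ind_cube' k a c : length a = k ->
  sumR (fun x => if eqL a x then c else 0) (cube k) = c.
Proof.
  intros. transitivity (sumR (fun x => if eqL x a then c else 0) (cube k)).
  apply sumR_ext; intros x; apply if_iff; split; auto. apply sum_ind_cube; auto.
Qed.

Lemma sum_ind_cube_neg k a c : length a = k ->
  sumR (fun x => if eqL a (map negb x) then c else 0) (cube k) = c.
Proof.
  intros. transitivity (sumR (fun x => if eqL x (map negb a) then c else 0) (cube k)).
  2:{ apply sum_ind_cube; rewrite length_map; auto. }
  apply sumR_ext; intros x; apply if_iff; split; intros ->; rewrite map_negb_invol; auto.
Qed.

Lemma psi_self_neg tau : tau <> nil -> tau <> map negb tau.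
Proof. destruct tau; intros H E; [congruence|]. simpl in E; inversion E. destruct b; discriminate. Qed.

Lemma Epsi_lin k f g a b : Epsi k (fun ps => a * f ps + b * g ps) = a * Epsi k f + b * Epsi k g.
Proof. unfold Epsi. rewrite sumR_plus, !sumR_scal. lra. Qed.

Lemma Epsi_psi_sigma k sigma : length sigma = k ->
  Epsi k (fun ps => ps sigma) = 1 - 2 / 2 ^ k.
Proof.
  intros Hl. unfold Epsi, psi.
  rewrite sumR_minus, sumR_minus, cube_count, sum_ind_cube', sum_ind_cube_neg by auto.
  field. apply pow_nonzero; lra.
Qed.

Lemma xi_val k : xi k = 1 - 2 / 2 ^ k.
Proof.
  unfold xi. rewrite sumR_ext_in with (g := fun _ => 1 - 2 / 2 ^ k).
  rewrite (sumR_ext _ (fun x : list Omega => (1 - 2/2^k) * (fun _ => 1) x)) by (intros; simpl; lra).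
  rewrite sumR_scal, cube_count. field. apply pow_nonzero; lra.
  intros; apply Epsi_psi_sigma; apply cube_length; auto.
Qed.

Definition indw (i : nat) (w : Omega) (t : list Omega) : R :=
  if Bool.eqb (nth i t true) w then 1 else 0.

Lemma sumR_const k c : sumR (fun _ : list Omega => c) (cube k) = c * 2 ^ k.
Proof.
  rewrite (sumR_ext _ (fun x : list Omega => c * (fun _ => 1) x)) by (intros; simpl; lra).
  rewrite sumR_scal, cube_count; auto.
Qed.

Lemma count_nth k i w : (i < k)%nat ->
  sumR (fun tau => indw i w tau) (cube k) = 2 ^ (k - 1).
Proof.
  revert i; induction k; intros i Hi; [lia|].
  rewrite cube_S. destruct i.
  - unfold indw; simpl. rewrite !sumR_const. replace (k - 0)%nat with k by lia.
    destruct w; simpl; lra.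
  - unfold indw; simpl. fold (indw i w).
    rewrite !IHk by lia. replace (k - 0)%nat with k by lia.
    destruct k; [lia|]. replace (S k - 1)%nat with k by lia. simpl; lra.
Qed.

Lemma nth_map_negb i l : (i < length l)%nat -> nth i (map negb l) true = negb (nth i l true).
Proof.
  revert i; induction l; simpl; intros i H; [lia|]. destruct i; auto. apply IHl; lia.
Qed.

Lemma sym_part1 k : (1 <= k)%nat -> forall (i : nat) (w : Omega) (tau0 : list Omega),
      (i < k)%nat -> length tau0 = k ->
      sumR (fun tau => if Bool.eqb (nth i tau true) w then psi tau0 tau else 0)
           (cube k)
      = 2 ^ (k - 1) * xi k.
Proof.
  intros Hk i w tau0 Hi Hl.
  rewrite (sumR_ext _ (fun tau => indw i w tau - (if eqL tau tau0 then indw i w tau0 else 0)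
     - (if eqL tau (map negb tau0) then indw i w (map negb tau0) else 0))).
  2:{ intros tau. unfold psi, indw. destruct (eqL tau tau0); destruct (eqL tau (map negb tau0)).
      - exfalso. rewrite e in e0. apply (psi_self_neg tau0); auto. intro E; rewrite E in Hl; simpl in Hl; lia.
      - subst; destruct (Bool.eqb _ w); lra.
      - subst; destruct (Bool.eqb _ w); lra.
      - destruct (Bool.eqb _ w); lra. }
  rewrite !sumR_minus, count_nth, sum_ind_cube, sum_ind_cube by (try rewrite length_map; auto).
  rewrite xi_val. unfold indw. rewrite nth_map_negb by (unfold Omega in *; lia).
  replace (2 ^ (k - 1) * (1 - 2 / 2 ^ k)) with (2 ^ (k-1) - 1).
  unfold Omega in *; destruct (nth i tau0 true), w; cbn [Bool.eqb negb]; lra.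
  destruct k; [lia|]. replace (S k - 1)%nat with k by lia. simpl. field. apply pow_nonzero; lra.
Qed.

Lemma agree_true k f g : agree k f g = true <-> (forall s, In s (cube k) -> f s = g s).
Proof.
  unfold agree. rewrite forallb_forall. split; intros H s Hs; specialize (H s Hs).
  - destruct (Req_EM_T (f s) (g s)); auto; discriminate.
  - destruct (Req_EM_T (f s) (g s)); auto.
Qed.

Lemma agree_ext k h f g : (forall s, In s (cube k) -> f s = g s) -> agree k h f = agree k h g.
Proof.
  intros H. destruct (agree k h f) eqn:E1, (agree k h g) eqn:E2; auto.
  - rewrite agree_true in E1. rewrite <- E2; symmetry; apply agree_true.
    intros s Hs; rewrite E1, H; auto.
  - rewrite agree_true in E2. rewrite <- E1; apply agree_true.
    intros s Hs; rewrite E2, H; auto.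
Qed.

Lemma psi_neg t s : psi (map negb t) s = psi t s.
Proof.
  unfold psi. rewrite map_negb_invol.
  destruct (eqL s (map negb t)), (eqL s t); lra.
Qed.

Lemma len_nonnil (t : list Omega) k : (1 <= k)%nat -> length t = k -> t <> nil.
Proof. intros H1 H2 E; subst; simpl in H1; lia. Qed.

Lemma psi_zero_iff t s : length t = length s -> (1 <= length t)%nat ->
  psi t s = 0 <-> (s = t \/ s = map negb t).
Proof.
  intros Hl H1. unfold psi.
  assert (t <> map negb t) by (apply psi_self_neg; eapply len_nonnil; eauto).
  destruct (eqL s t), (eqL s (map negb t)); split; intros HH;
    first [tauto | lra | (exfalso; congruence) | (destruct HH; congruence)].
Qed.

Lemma agree_psi k tau t : (1 <= k)%nat -> length tau = k -> length t = k ->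
  agree k (psi tau) (psi t) = true <-> (tau = t \/ tau = map negb t).
Proof.
  intros Hk H1 H2. rewrite agree_true. split.
  - intros H. assert (Ht: In t (cube k)) by (apply cube_complete; auto).
    specialize (H t Ht).
    assert (psi t t = 0) by (apply psi_zero_iff; auto; lia).
    rewrite H0 in H. apply psi_zero_iff in H; try lia.
    destruct H; [left; auto|right]. rewrite H, map_negb_invol; auto.
  - intros [E|E] s _; rewrite E; auto. apply psi_neg.
Qed.

Lemma Pmass_psi k t : (1 <= k)%nat -> length t = k -> Pmass k (psi t) = 2 / 2 ^ k.
Proof.
  intros Hk Hl. unfold Pmass.
  rewrite (sumR_ext_in _ (fun tau => (if eqL tau t then 1 else 0) + (if eqL tau (map negb t) then 1 else 0))).
  - rewrite sumR_plus, !sum_ind_cube; auto. field. apply pow_nonzero; lra.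
    rewrite length_map; auto.
  - intros tau Htau. apply cube_length in Htau.
    assert (t <> map negb t) by (apply psi_self_neg; eapply len_nonnil; eauto).
    destruct (agree k (psi tau) (psi t)) eqn:E.
    + apply agree_psi in E; auto. destruct E; subst.
      destruct (eqL t t); [|congruence]. destruct (eqL t (map negb t)); [congruence|lra].
      destruct (eqL (map negb t) t). exfalso; apply H; auto.
      destruct (eqL (map negb t) (map negb t)); [lra|congruence].
    + destruct (eqL tau t), (eqL tau (map negb t)); try lra; exfalso;
      assert (agree k (psi tau) (psi t) = true) by (apply agree_psi; auto);
      congruence.
Qed.

Lemma nth_map_seq {A} (f : nat -> A) k i d : (i < k)%nat -> nth i (map f (seq 0 k)) d = f i.
Proof.
  intros H. rewrite (nth_indep _ d (f 0%nat)) by (rewrite length_map, length_seq; auto).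
  rewrite map_nth, seq_nth; auto.
Qed.

Lemma perm_surj k theta : is_perm k theta -> forall j, (j < k)%nat -> exists i, (i < k)%nat /\ theta i = j.
Proof.
  intros [H1 H2] j Hj.
  assert (ND : NoDup (map theta (seq 0 k))).
  { apply NoDup_map_NoDup_ForallPairs; [|apply seq_NoDup].
    intros x y Hx Hy E. apply in_seq in Hx, Hy. apply H2; auto; lia. }
  assert (incl (seq 0 k) (map theta (seq 0 k))).
  { apply NoDup_length_incl; auto. rewrite length_map; auto.
    intros x Hx. apply in_map_iff in Hx. destruct Hx as [i [<- Hi]].
    apply in_seq in Hi. apply in_seq. specialize (H1 i). lia. }
  assert (In j (seq 0 k)) by (apply in_seq; lia).
  apply H in H0. apply in_map_iff in H0. destruct H0 as [i [E Hi]]. apply in_seq in Hi.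
  exists i; split; auto; lia.
Qed.

Lemma perm_tau1 k theta (tau0 : list Omega) : is_perm k theta -> length tau0 = k ->
  exists tau1 : list Omega, length tau1 = k /\ forall i, (i < k)%nat -> nth (theta i) tau1 true = nth i tau0 true.
Proof.
  intros Hp Hl.
  assert (forall m, (m <= k)%nat -> exists l : list Omega, length l = m /\
     forall j, (j < m)%nat -> forall i, (i < k)%nat -> theta i = j -> nth j l true = nth i tau0 true).
  { induction m; intros Hm.
    - exists nil; split; auto. intros; lia.
    - destruct IHm as [l [Hl1 Hl2]]; [lia|].
      destruct (perm_surj k theta Hp m) as [i0 [Hi0 E0]]; [lia|].
      exists (l ++ [nth i0 tau0 true]). split. rewrite length_app; simpl; lia.
      intros j Hj i Hi E. destruct (Nat.eq_dec j m).
      + rewrite app_nth2 by (unfold Omega in *; lia). replace (j - length l)%nat with 0%nat by (unfold Omega in *; lia).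
        simpl. f_equal. destruct Hp as [_ Hinj]. apply Hinj; auto; lia.
      + rewrite app_nth1 by (unfold Omega in *; lia). apply Hl2; auto. lia. }
  destruct (H k (le_n _)) as [l [H1 H2]]. exists l; split; auto.
  intros i Hi. apply H2; auto. destruct Hp as [Hp _]; apply Hp; auto.
Qed.

Definition pmap (k : nat) (theta : nat -> nat) (sigma : list Omega) : list Omega :=
  map (fun i => nth (theta i) sigma true) (seq 0 k).

Lemma pmap_key k theta (t tau1 sigma : list Omega) : is_perm k theta ->
  length t = k -> length tau1 = k -> length sigma = k ->
  (forall i, (i < k)%nat -> nth (theta i) tau1 true = nth i t true) ->
  (pmap k theta sigma = t <-> sigma = tau1).
Proof.
  intros Hp Ht H1 Hs Htau. unfold pmap. split.
  - intros E. apply nth_ext with (d := true) (d' := true); [unfold Omega in *; lia|].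
    intros j Hj. destruct (perm_surj k theta Hp j) as [i [Hi <-]]; [unfold Omega in *; lia|].
    rewrite Htau by auto. rewrite <- E. rewrite nth_map_seq; auto.
  - intros ->. apply nth_ext with (d := true) (d' := true).
    rewrite length_map, length_seq; auto.
    intros i Hi. rewrite length_map, length_seq in Hi. rewrite nth_map_seq; auto.
Qed.

Lemma sym_part2 k : (1 <= k)%nat -> forall (theta : nat -> nat) (tau0 : list Omega),
      is_perm k theta -> length tau0 = k ->
      Pmass k (psi tau0) = Pmass k (permute k theta (psi tau0)).
Proof.
  intros Hk theta tau0 Hp Hl.
  destruct (perm_tau1 k theta tau0 Hp Hl) as [tau1 [H1 H2]].
  assert (Hext : forall s, In s (cube k) -> permute k theta (psi tau0) s = psi tau1 s).
  { intros s Hs. apply cube_length in Hs. unfold permute. fold (pmap k theta s).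
    unfold psi. f_equal; [f_equal|].
    - apply if_iff. apply pmap_key; auto.
    - apply if_iff. apply pmap_key; auto; try rewrite length_map; auto.
      intros i Hi. rewrite !nth_map_negb by (unfold Omega in *; try (destruct Hp as [Hp _]; specialize (Hp i)); lia).
      f_equal; auto. }
  unfold Pmass at 2. rewrite (sumR_ext _ (fun tau => if agree k (psi tau) (psi tau1) then 1 else 0)).
  fold (Pmass k (psi tau1)). rewrite !Pmass_psi; auto.
  intros tau. rewrite (agree_ext _ _ _ _ Hext); auto.
Qed.

Lemma SYM_holds k : (1 <= k)%nat -> SYM k.
Proof. intros; split; [apply sym_part1; auto | apply sym_part2; auto]. Qed.

Lemma sum_prod_cube k (mu : Omega -> R) :
  sumR (fun tau => prodR mu tau) (cube k) = (mu true + mu false) ^ k.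
Proof.
  induction k; [simpl; lra|]. rewrite cube_S. simpl.
  rewrite !sumR_scal. assert (IH2 : sumR (prodR mu) (cube k) = (mu true + mu false) ^ k) by exact IHk. rewrite ?IH2, ?IHk. ring.
Qed.

Lemma phi_val k mu : phi k mu = (1 - 2 / 2 ^ k) * (mu true + mu false) ^ k.
Proof.
  unfold phi. rewrite (sumR_ext_in _ (fun tau => (1 - 2/2^k) * prodR mu tau)).
  rewrite sumR_scal, sum_prod_cube; auto.
  intros tau Ht. rewrite Epsi_psi_sigma; auto. apply cube_length; auto.
Qed.

Lemma BAL_holds k : BAL k.
Proof.
  split.
  - intros mu1 mu2 t [_ H1] [_ H2] Ht. rewrite !phi_val.
    replace (t * mu1 true + (1 - t) * mu2 true + (t * mu1 false + (1 - t) * mu2 false))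
      with (t * (mu1 true + mu1 false) + (1-t) * (mu2 true + mu2 false)) by ring.
    rewrite H1, H2. replace (t * 1 + (1 - t) * 1) with 1 by ring. lra.
  - intros mu [_ H]. rewrite !phi_val, H. replace (/2 + /2) with 1 by field. lra.
Qed.

Definition ind (x y : list Omega) : R := if eqL x y then 1 else 0.

Lemma L_ac s u t : ind s t * ind u t = if eqL t s then ind u s else 0.
Proof. unfold ind. destruct (eqL s t), (eqL u t), (eqL t s), (eqL u s); subst; try lra; congruence. Qed.

Lemma L_ad s u t : ind s t * ind u (map negb t) = if eqL t s then ind u (map negb s) else 0.
Proof.
  unfold ind. destruct (eqL s t), (eqL u (map negb t)), (eqL t s), (eqL u (map negb s)); subst; try lra; congruence.
Qed.

Lemma L_bc s u t : ind s (map negb t) * ind u t = if eqL t (map negb s) then ind u (map negb s) else 0.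
Proof.
  unfold ind. pose proof (map_negb_invol t). pose proof (map_negb_invol s).
  destruct (eqL s (map negb t)), (eqL u t), (eqL t (map negb s)), (eqL u (map negb s)); try lra;
  exfalso; subst; try congruence.
Qed.

Lemma L_bd s u t : ind s (map negb t) * ind u (map negb t) = if eqL t (map negb s) then ind u s else 0.
Proof.
  unfold ind. pose proof (map_negb_invol t). pose proof (map_negb_invol s).
  destruct (eqL s (map negb t)), (eqL u (map negb t)), (eqL t (map negb s)), (eqL u s); try lra;
  exfalso; subst; try congruence.
Qed.

Lemma L_a s t : ind s t = if eqL t s then 1 else 0.
Proof. unfold ind. destruct (eqL s t), (eqL t s); subst; congruence || lra. Qed.

Lemma L_b s t : ind s (map negb t) = if eqL t (map negb s) then 1 else 0.
Proof.
  unfold ind. pose proof (map_negb_invol t). pose proof (map_negb_invol s).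
  destruct (eqL s (map negb t)), (eqL t (map negb s)); try lra; exfalso; subst; congruence.
Qed.

Lemma E2_val k s u : length s = k -> length u = k ->
  Epsi k (fun ps => ps s * ps u) = 1 - 4 / 2 ^ k + 2 / 2 ^ k * (ind u s + ind u (map negb s)).
Proof.
  intros Hs Hu. unfold Epsi.
  rewrite (sumR_ext _ (fun t => 1 - (if eqL t s then 1 else 0) - (if eqL t (map negb s) then 1 else 0)
     - (if eqL t u then 1 else 0) - (if eqL t (map negb u) then 1 else 0)
     + (if eqL t s then ind u s else 0) + (if eqL t s then ind u (map negb s) else 0)
     + (if eqL t (map negb s) then ind u (map negb s) else 0) + (if eqL t (map negb s) then ind u s else 0))).
  2:{ intros t. unfold psi. fold (ind s t) (ind s (map negb t)) (ind u t) (ind u (map negb t)).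
      rewrite <- L_ac, <- L_ad, <- L_bc, <- L_bd, <- (L_a s), <- (L_a u), <- (L_b s), <- (L_b u). ring. }
  rewrite !sumR_plus, !sumR_minus, cube_count.
  rewrite !sum_ind_cube by (try rewrite length_map; auto).
  field. apply pow_nonzero; lra.
Qed.

Definition Wr (rho : Omega -> Omega -> R) s u := prodR (fun p => rho (fst p) (snd p)) (combine s u).

Lemma Wr_cons rho a b s u : Wr rho (a :: s) (b :: u) = rho a b * Wr rho s u.
Proof. reflexivity. Qed.

Lemma sumR2_scal {A B} c (g : A -> B -> R) l1 l2 :
  sumR (fun x => sumR (fun t => c * g x t) l2) l1 = c * sumR (fun x => sumR (fun t => g x t) l2) l1.
Proof. rewrite <- sumR_scal. apply sumR_ext; intros; apply sumR_scal. Qed.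

Lemma F1 k rho : sumR (fun s => sumR (fun u => Wr rho s u) (cube k)) (cube k)
   = (rho true true + rho true false + rho false true + rho false false) ^ k.
Proof.
  induction k; [simpl; unfold Wr; simpl; lra|].
  rewrite cube_S. rewrite !(sumR_ext _ _ _ (fun x => cube_S _ _)).
  rewrite !sumR_plus. unfold Wr in *; unfold Omega in *; simpl. rewrite !sumR2_scal.
  rewrite IHk. ring.
Qed.

Lemma F2 k rho : sumR (fun s => Wr rho s s) (cube k) = (rho true true + rho false false) ^ k.
Proof.
  induction k; [simpl; unfold Wr; simpl; lra|].
  rewrite cube_S. unfold Wr in *; unfold Omega in *; simpl. rewrite !sumR_scal, IHk. ring.
Qed.

Lemma F3 k rho : sumR (fun s => Wr rho s (map negb s)) (cube k) = (rho true false + rho false true) ^ k.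
Proof.
  induction k; [simpl; unfold Wr; simpl; lra|].
  rewrite cube_S. unfold Wr in *; unfold Omega in *; simpl. rewrite !sumR_scal, IHk. ring.
Qed.

Lemma varphi_val k rho : varphi k rho =
  (1 - 4 / 2 ^ k) * (rho true true + rho true false + rho false true + rho false false) ^ k
  + 2 / 2 ^ k * ((rho true true + rho false false) ^ k + (rho true false + rho false true) ^ k).
Proof.
  unfold varphi. fold (Wr rho).
  rewrite (sumR_ext_in _ (fun s => (1 - 4 / 2 ^ k) * sumR (fun u => Wr rho s u) (cube k)
        + 2 / 2 ^ k * (Wr rho s s + Wr rho s (map negb s)))).
  - rewrite sumR_plus, !sumR_scal, sumR_plus, F1, F2, F3. ring.
  - intros s Hs. apply cube_length in Hs.
    rewrite (sumR_ext_in _ (fun u => (1 - 4/2^k) * Wr rho s u + 2/2^k * ((if eqL u s then Wr rho s s else 0)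
        + (if eqL u (map negb s) then Wr rho s (map negb s) else 0)))).
    + rewrite sumR_plus, !sumR_scal, sumR_plus, !sum_ind_cube; auto. rewrite length_map; auto.
    + intros u Hu. apply cube_length in Hu. rewrite E2_val by auto.
      unfold ind, Wr. destruct (eqL u s), (eqL u (map negb s)); subst; try ring. rewrite <- e0. ring.
Qed.

Lemma pow_half_ineq a b k : 0 <= a -> 0 <= b -> a + b = 1 -> a <> b -> (2 <= k)%nat ->
  2 * (/2) ^ k < a ^ k + b ^ k.
Proof.
  intros Ha Hb Hab Hne Hk. induction k as [|k IH]; [lia|].
  destruct (Nat.eq_dec k 1).
  - subst. simpl. assert ((a - b) * (a - b) > 0).
    { assert (a - b <> 0) by lra. nra. } nra.
  - assert (IH' : 2 * (/2) ^ k < a ^ k + b ^ k) by (apply IH; lia).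
    assert (0 <= (a - b) * (a ^ k - b ^ k)).
    { destruct (Rle_dec b a).
      - apply Rmult_le_pos; [lra|]. assert (b ^ k <= a ^ k) by (apply pow_incr; lra). lra.
      - assert (a ^ k <= b ^ k) by (apply pow_incr; lra).
        replace ((a - b) * (a ^ k - b ^ k)) with ((b - a) * (b ^ k - a ^ k)) by ring.
        apply Rmult_le_pos; lra. }
    simpl. replace (a * a ^ k + b * b ^ k) with ((a ^ k + b ^ k) * (a + b) / 2 + (a - b) * (a ^ k - b ^ k) / 2) by field.
    rewrite Hab. lra.
Qed.

Lemma MIN_holds k : (2 <= k)%nat -> MIN k.
Proof.
  intros Hk rho [Hpos [Hsum [Hm1 Hm2]]].
  destruct (Req_dec (rho true true) (/4)) as [E|E].
  - left. pose proof (Hm1 true). pose proof (Hm1 false). pose proof (Hm2 true). pose proof (Hm2 false).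
    intros [] []; lra.
  - right. rewrite !varphi_val.
    set (a := rho true true + rho false false). set (b := rho true false + rho false true).
    assert (Hab : a + b = 1) by (unfold a, b; lra).
    assert (Ha : 0 <= a) by (unfold a; pose proof (Hpos true true); pose proof (Hpos false false); lra).
    assert (Hb : 0 <= b) by (unfold b; pose proof (Hpos true false); pose proof (Hpos false true); lra).
    assert (Hne : a <> b).
    { pose proof (Hm1 true). pose proof (Hm1 false). pose proof (Hm2 true). pose proof (Hm2 false).
      unfold a, b; lra. }
    pose proof (pow_half_ineq a b k Ha Hb Hab Hne Hk).
    replace (/4 + /4 + /4 + /4) with 1 by field. replace (/4 + /4) with (/2) by field.
    replace (rho true true + rho true false + rho false true + rho false false) with 1 by lra.
    assert (0 < 2 / 2 ^ k). { apply Rdiv_lt_0_compat; [lra|]. apply pow_lt; lra. }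
    nra.
Qed.

Lemma cont_plus f g : continuity f -> continuity g -> continuity (fun x => f x + g x).
Proof. intros; exact (continuity_plus f g H H0). Qed.
Lemma cont_mult f g : continuity f -> continuity g -> continuity (fun x => f x * g x).
Proof. intros; exact (continuity_mult f g H H0). Qed.
Lemma cont_const c : continuity (fun _ => c).
Proof. apply continuity_const. intros x y; reflexivity. Qed.
Lemma cont_id : continuity (fun x => x).
Proof. apply derivable_continuous, derivable_id. Qed.
Lemma cont_pow f n : continuity f -> continuity (fun x => f x ^ n).
Proof. intros H; induction n; simpl. apply cont_const. apply cont_mult; auto. Qed.
Lemma cont_sumR {A} (T : list A) (d : A -> R) (g : A -> R -> R) :
  (forall a, In a T -> continuity (g a)) -> continuity (fun x => sumR (fun a => d a * g a x) T).
Proof.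
  induction T; intros H; simpl. apply cont_const.
  apply cont_plus. apply cont_mult. apply cont_const. apply H; left; auto.
  apply IHT; intros; apply H; right; auto.
Qed.

Lemma pint_ext (m : PMeas) f g : (forall x, f x = g x) -> pint m f = pint m g.
Proof. intros; apply pint_local; auto. Qed.

Lemma pint_sum {A} (m : PMeas) (T : list A) (d : A -> R) (g : A -> R -> R) :
  (forall a, In a T -> continuity (g a)) ->
  pint m (fun x => sumR (fun a => d a * g a x) T) = sumR (fun a => d a * pint m (g a)) T.
Proof.
  induction T; intros H; simpl.
  - rewrite (pint_ext m _ (fun x => 0 * (fun _ => 1) x + 0 * (fun _ => 1) x)) by (intros; lra).
    rewrite pint_lin; try apply cont_const. lra.
  - rewrite (pint_ext m _ (fun x => d a * g a x + 1 * (fun x => sumR (fun a => d a * g a x) T) x)) by (intros; simpl; lra).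
    rewrite pint_lin. rewrite IHT. lra.
    intros; apply H; right; auto. apply H; left; auto.
    apply cont_sumR. intros; apply H; right; auto.
Qed.

Lemma iterI_ext ms F G : (forall ys, length ys = length ms -> F ys = G ys) ->
  iterI (map pint ms) F = iterI (map pint ms) G.
Proof.
  revert F G; induction ms; intros F G H; simpl; auto.
  apply pint_ext. intros x. apply IHms. intros; apply H; simpl; auto.
Qed.

Definition prodF (fs : list (R -> R)) (ys : list R) : R :=
  prodR (fun p => fst p (snd p)) (combine fs ys).

Definition prodI (ms : list PMeas) (fs : list (R -> R)) : R :=
  prodR (fun p => pint (fst p) (snd p)) (combine ms fs).

Lemma iterI_sum {A} (T : list A) (fs : A -> list (R -> R)) ms : forall (c : A -> R),
  (forall a, In a T -> length (fs a) = length ms /\ forall f, In f (fs a) -> continuity f) ->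
  iterI (map pint ms) (fun ys => sumR (fun a => c a * prodF (fs a) ys) T)
  = sumR (fun a => c a * prodI ms (fs a)) T.
Proof.
  revert fs. induction ms as [|m ms IH]; intros fs c H.
  - simpl. apply sumR_ext; intros a. unfold prodF, prodI. destruct (fs a); reflexivity.
  - simpl.
    rewrite (pint_ext m _ (fun x => iterI (map pint ms) (fun ys =>
       sumR (fun a => (c a * hd (fun _ => 1) (fs a) x) * prodF (tl (fs a)) ys) T))).
    2:{ intros x. apply iterI_ext. intros ys _. apply sumR_ext_in. intros a Ha.
        destruct (H a Ha) as [Hl _]. destruct (fs a); simpl in Hl; [lia|].
        unfold prodF; simpl. ring. }
    rewrite (pint_ext m _ (fun x => sumR (fun a => (c a * prodI ms (tl (fs a))) * hd (fun _ => 1) (fs a) x) T)).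
    2:{ intros x. rewrite (IH (fun a => tl (fs a))). apply sumR_ext; intros; ring.
        intros a Ha. destruct (H a Ha) as [Hl Hc]. destruct (fs a); simpl in *; [lia|].
        split; [lia|]. intros; apply Hc; right; auto. }
    rewrite pint_sum.
    + apply sumR_ext_in. intros a Ha. destruct (H a Ha) as [Hl _].
      destruct (fs a); simpl in Hl; [lia|]. unfold prodI; simpl. replace (pint m (fun x => r x)) with (pint m r) by reflexivity. ring.
    + intros a Ha. destruct (H a Ha) as [Hl Hc].
      destruct (fs a); simpl in Hl; [lia|]. apply Hc; left; auto.
Qed.

Definition Pp (t : list Omega) (xs : list R) : R :=
  prodR (fun p => mu_of (snd p) (fst p)) (combine t xs).

Lemma sum_Pp k xs : length xs = k -> sumR (fun tau => Pp tau xs) (cube k) = 1.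
Proof.
  revert xs; induction k; intros xs Hl.
  - destruct xs; [|discriminate]. simpl. unfold Pp; simpl. lra.
  - destruct xs as [|x xs]; [discriminate|]. simpl in Hl.
    rewrite cube_S. unfold Pp in *; unfold Omega in *; simpl.
    rewrite !sumR_scal, IHk by lia. ring.
Qed.

Lemma Wt_psi k t xs : (1 <= k)%nat -> length t = k -> length xs = k ->
  1 - Wt k (psi t) xs = Pp t xs + Pp (map negb t) xs.
Proof.
  intros Hk Ht Hx. unfold Wt. fold Pp.
  rewrite (sumR_ext _ (fun tau => Pp tau xs - (if eqL tau t then Pp t xs else 0)
       - (if eqL tau (map negb t) then Pp (map negb t) xs else 0))).
  - rewrite !sumR_minus, sum_Pp, !sum_ind_cube; auto. ring. rewrite length_map; auto.
  - intros tau. unfold psi.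
    assert (t <> map negb t) by (apply psi_self_neg; eapply len_nonnil; eauto).
    destruct (eqL tau t), (eqL tau (map negb t)); subst; try ring. all: try congruence; unfold Pp; ring.
Qed.

Definition hh (l j : nat) (b : Omega) (x : R) : R := mu_of x b ^ j * mu_of x (negb b) ^ (l - j).

Definition Qj (l j : nat) (t : list Omega) (xs : list R) : R :=
  prodR (fun p => hh l j (fst p) (snd p)) (combine t xs).

Lemma PQ l j t xs : Pp t xs ^ j * Pp (map negb t) xs ^ (l - j) = Qj l j t xs.
Proof.
  revert xs; induction t as [|a t IH]; intros xs.
  - unfold Pp, Qj; simpl. rewrite !pow1; ring.
  - destruct xs as [|x xs].
    + unfold Pp, Qj; simpl. rewrite !pow1; ring.
    + unfold Pp, Qj in *; simpl. rewrite !Rpow_mult_distr, <- IH. unfold hh. ring.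
Qed.

Lemma sum_f_R0_sumR f n : sum_f_R0 f n = sumR f (seq 0 (S n)).
Proof.
  induction n; [simpl; lra|].
  rewrite seq_S, sumR_app. simpl. rewrite IHn. simpl. lra.
Qed.

Lemma binom_Q l t xs : (Pp t xs + Pp (map negb t) xs) ^ l =
  sumR (fun j => C l j * Qj l j t xs) (seq 0 (S l)).
Proof.
  rewrite binomial, sum_f_R0_sumR. apply sumR_ext. intros j. rewrite <- PQ. ring.
Qed.

Lemma gk_ineq n A B : 0 <= A -> 0 <= B ->
  0 <= A ^ S n + INR n * B ^ S n - INR (S n) * A * B ^ n.
Proof.
  intros HA HB. induction n.
  - simpl. lra.
  - assert (0 <= (A - B) * (A ^ S n - B ^ S n)).
    { destruct (Rle_dec B A).
      - apply Rmult_le_pos; [lra|]. assert (B ^ S n <= A ^ S n) by (apply pow_incr; lra). lra.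
      - assert (A ^ S n <= B ^ S n) by (apply pow_incr; lra).
        replace ((A - B) * (A ^ S n - B ^ S n)) with ((B - A) * (B ^ S n - A ^ S n)) by ring.
        apply Rmult_le_pos; lra. }
    assert (0 <= B * (A ^ S n + INR n * B ^ S n - INR (S n) * A * B ^ n)) by (apply Rmult_le_pos; auto).
    replace (A ^ S (S n) + INR (S n) * B ^ S (S n) - INR (S (S n)) * A * B ^ S n)
      with (B * (A ^ S n + INR n * B ^ S n - INR (S n) * A * B ^ n) + (A - B) * (A ^ S n - B ^ S n)).
    lra. rewrite !S_INR. simpl. ring.
Qed.

Lemma C_nonneg n p : 0 <= C n p.
Proof.
  unfold C. apply Rmult_le_pos. apply pos_INR. apply Rlt_le, Rinv_0_lt_compat.
  apply Rmult_lt_0_compat; apply lt_0_INR; apply Nat.neq_0_lt_0, fact_neq_0.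
Qed.

Definition one : R -> R := fun _ => 1.

Lemma prodF_nil fs : prodF fs nil = 1.
Proof. unfold prodF. destruct fs; reflexivity. Qed.

Lemma prodF_cons f fs y ys : prodF (f :: fs) (y :: ys) = f y * prodF fs ys.
Proof. reflexivity. Qed.

Lemma prodF_app fs1 fs2 ys :
  prodF (fs1 ++ fs2) ys = prodF fs1 (firstn (length fs1) ys) * prodF fs2 (skipn (length fs1) ys).
Proof.
  revert ys; induction fs1 as [|f fs1 IH]; intros ys.
  - simpl. rewrite prodF_nil; ring.
  - destruct ys as [|y ys]. rewrite firstn_nil, skipn_nil, !prodF_nil. ring.
    simpl. rewrite !prodF_cons, IH. ring.
Qed.

Lemma prodF_one n ys : prodF (repeat one n) ys = 1.
Proof.
  revert ys; induction n; intros ys. destruct ys; reflexivity.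
  destruct ys. apply prodF_nil. simpl. rewrite prodF_cons, IHn. unfold one; ring.
Qed.

Lemma prodF_map {A} (g : A -> R -> R) t xs :
  prodF (map g t) xs = prodR (fun p => g (fst p) (snd p)) (combine t xs).
Proof.
  revert xs; induction t; intros xs. destruct xs; reflexivity.
  destruct xs. apply prodF_nil. simpl. rewrite prodF_cons, IHt. reflexivity.
Qed.

Definition fsA l j t k := map (hh l j) t ++ repeat one k.
Definition fsB l j t k := repeat one k ++ map (hh l j) t.
Definition fsC l j (t : list Omega) k' :=
  match t with
  | t0 :: t' => hh l j t0 :: (repeat one k' ++ one :: map (hh l j) t')
  | nil => nil
  end.

Definition integ_sum l k k' t ys :=
  sumR (fun j => C l j * (prodF (fsA l j t k) ys + (INR k - 1) * prodF (fsB l j t k) ys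
                           - INR k * prodF (fsC l j t k') ys)) (seq 0 (S l)).

Lemma integrand_eq k' l t ys : length t = S k' -> length ys = (S k' + S k')%nat ->
  POS_integrand (S k') l (psi t) ys = integ_sum l (S k') k' t ys.
Proof.
  intros Ht Hy. unfold POS_integrand. cbv zeta.
  assert (L1 : length (firstn (S k') ys) = S k') by (rewrite length_firstn; lia).
  assert (L2 : length (skipn (S k') ys) = S k') by (rewrite length_skipn; lia).
  destruct ys as [|y0 ys1]; [simpl in Hy; lia|].
  destruct t as [|t0 t']; [simpl in Ht; lia|].
  simpl in Hy, Ht.
  assert (Ez : exists z zs, skipn k' ys1 = z :: zs /\ length zs = k').
  { destruct (skipn k' ys1) eqn:E. apply (f_equal (@length R)) in E. rewrite length_skipn in E. simpl in E. lia.
    exists r, l0. split; auto. apply (f_equal (@length R)) in E. rewrite length_skipn in E. simpl in E. lia. }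
  destruct Ez as [z [zs [Ez Hzs]]].
  assert (Hmix : nth 0 (firstn (S k') (y0 :: ys1)) 0 :: skipn 1 (skipn (S k') (y0 :: ys1)) = y0 :: zs).
  { simpl. rewrite Ez. reflexivity. }
  rewrite Hmix.
  rewrite !Wt_psi; try lia; auto; try (simpl; lia).
  rewrite !binom_Q. unfold integ_sum.
  rewrite <- !sumR_scal, <- sumR_plus, <- sumR_minus. apply sumR_ext. intros j.
  unfold fsA, fsB, fsC. rewrite !prodF_app, !prodF_one, !length_map, !repeat_length.
  rewrite !prodF_map. fold (Qj l j (t0 :: t') (firstn (S k') (y0 :: ys1))).
  rewrite prodF_cons, prodF_app, prodF_one, repeat_length, Ez, prodF_cons, prodF_map.
  unfold Qj. simpl (combine (t0 :: t') (y0 :: zs)). simpl (prodR _ ((t0, y0) :: _)).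
  unfold one. simpl length. replace (length t') with k' by lia. ring.
Qed.

Lemma sumR_flat_map {A B} (f : B -> R) (g : A -> list B) l :
  sumR f (flat_map g l) = sumR (fun x => sumR f (g x)) l.
Proof. induction l; simpl; auto. rewrite sumR_app, IHl. reflexivity. Qed.

Lemma sumR_swap {A B} (F : A -> B -> R) l1 l2 :
  sumR (fun x => sumR (fun y => F x y) l2) l1 = sumR (fun y => sumR (fun x => F x y) l1) l2.
Proof.
  induction l1; simpl.
  - symmetry. apply sumR_zero.
  - rewrite IHl1. rewrite <- sumR_plus. reflexivity.
Qed.

Definition cc (l k : nat) (a : nat * nat) : R :=
  C l (fst a) * (match snd a with 0%nat => 1 | 1%nat => INR k - 1 | _ => - INR k end).
Definition ff (l k k' : nat) (t : list Omega) (a : nat * nat) : list (R -> R) :=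
  match snd a with 0%nat => fsA l (fst a) t k | 1%nat => fsB l (fst a) t k | _ => fsC l (fst a) t k' end.
Definition TT (l : nat) : list (nat * nat) :=
  flat_map (fun j => [(j, 0%nat); (j, 1%nat); (j, 2%nat)]) (seq 0 (S l)).

Lemma integ_sum_T l k k' t ys :
  integ_sum l k k' t ys = sumR (fun a => cc l k a * prodF (ff l k k' t a) ys) (TT l).
Proof.
  unfold integ_sum, TT. rewrite sumR_flat_map. apply sumR_ext. intros j.
  unfold cc, ff; simpl. ring.
Qed.

Lemma cont_mu b : continuity (fun x => mu_of x b).
Proof.
  destruct b; simpl. apply cont_id.
  apply (continuity_minus (fun _ => 1) (fun x => x)); [apply cont_const|apply cont_id].
Qed.

Lemma cont_hh l j b : continuity (hh l j b).
Proof.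
  unfold hh. apply cont_mult; apply cont_pow; apply cont_mu.
Qed.

Lemma ff_ok l k' t a : length t = S k' ->
  length (ff l (S k') k' t a) = length (repeat 0%nat (S k') ++ repeat 0%nat (S k'))
  /\ forall f, In f (ff l (S k') k' t a) -> continuity f.
Proof.
  intros Ht. rewrite length_app, !repeat_length.
  unfold ff, fsA, fsB, fsC. destruct (snd a) as [|[|q]]; split.
  - rewrite length_app, length_map, repeat_length; lia.
  - intros f Hf. apply in_app_or in Hf. destruct Hf as [Hf|Hf].
    apply in_map_iff in Hf. destruct Hf as [b [<- _]]. apply cont_hh.
    apply repeat_spec in Hf. subst. apply cont_const.
  - rewrite length_app, length_map, repeat_length; lia.
  - intros f Hf. apply in_app_or in Hf. destruct Hf as [Hf|Hf].
    apply repeat_spec in Hf. subst. apply cont_const.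
    apply in_map_iff in Hf. destruct Hf as [b [<- _]]. apply cont_hh.
  - destruct t as [|t0 t']; simpl in Ht; [lia|]. simpl.
    rewrite length_app, repeat_length. simpl. rewrite length_map. lia.
  - destruct t as [|t0 t']; simpl in Ht; [lia|]. intros f Hf. destruct Hf as [<-|Hf]. apply cont_hh.
    apply in_app_or in Hf. destruct Hf as [Hf|Hf].
    apply repeat_spec in Hf. subst. apply cont_const.
    destruct Hf as [<-|Hf]. apply cont_const.
    apply in_map_iff in Hf. destruct Hf as [b [<- _]]. apply cont_hh.
Qed.

Lemma prodI_app ms1 ms2 fs1 fs2 : length ms1 = length fs1 ->
  prodI (ms1 ++ ms2) (fs1 ++ fs2) = prodI ms1 fs1 * prodI ms2 fs2.
Proof.
  revert fs1; induction ms1; intros fs1 H; destruct fs1; simpl in H; try lia.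
  - unfold prodI; simpl. ring.
  - unfold prodI in *; simpl. rewrite IHms1 by lia. ring.
Qed.

Lemma prodI_one m n : prodI (repeat m n) (repeat one n) = 1.
Proof.
  induction n; [reflexivity|]. unfold prodI in *; simpl. rewrite IHn.
  unfold one. rewrite pint_one. ring.
Qed.

Lemma prodI_map m n g (t : list Omega) : length t = n ->
  prodI (repeat m n) (map g t) = prodR (fun b => pint m (g b)) t.
Proof.
  revert t; induction n; intros t H; destruct t; simpl in H; try lia.
  - reflexivity.
  - unfold prodI in *; simpl. rewrite IHn by lia. reflexivity.
Qed.

Definition aj (pi : PMeas) l j (b : Omega) := pint pi (hh l j b).

Lemma iterI_t pi pi' l k' t : length t = S k' ->
  iterI (repeat (pint pi) (S k') ++ repeat (pint pi') (S k')) (POS_integrand (S k') l (psi t))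
  = sumR (fun j => C l j * (prodR (aj pi l j) t + (INR (S k') - 1) * prodR (aj pi' l j) t
       - INR (S k') * (aj pi l j (hd true t) * prodR (aj pi' l j) (tl t)))) (seq 0 (S l)).
Proof.
  intros Ht.
  replace (repeat (pint pi) (S k') ++ repeat (pint pi') (S k'))
    with (map pint (repeat pi (S k') ++ repeat pi' (S k'))).
  2:{ rewrite map_app, !map_repeat. reflexivity. }
  rewrite (iterI_ext _ _ (fun ys => sumR (fun a => cc l (S k') a * prodF (ff l (S k') k' t a) ys) (TT l))).
  2:{ intros ys Hys. rewrite length_app, !repeat_length in Hys.
      rewrite integrand_eq by auto. apply integ_sum_T. }
  rewrite iterI_sum.
  2:{ intros a _. destruct (ff_ok l k' t a Ht) as [H1 H2]. split; auto.
      rewrite H1, !length_app, !repeat_length. reflexivity. }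
  unfold TT. rewrite sumR_flat_map. apply sumR_ext. intros j.
  rewrite !sumR_cons, sumR_nil. unfold cc, ff, fsA, fsB, fsC; cbn [fst snd].
  destruct t as [|t0 t']; simpl in Ht; [lia|]. injection Ht as Ht.
  rewrite (prodI_app (repeat pi (S k')) (repeat pi' (S k')) (map (hh l j) (t0::t')) (repeat one (S k')))
    by (rewrite repeat_length, length_map; simpl; lia).
  rewrite (prodI_app (repeat pi (S k')) (repeat pi' (S k')) (repeat one (S k')) (map (hh l j) (t0::t')))
    by (rewrite !repeat_length; auto).
  rewrite !prodI_one, !prodI_map by (simpl; lia).
  replace (prodI (repeat pi (S k') ++ repeat pi' (S k')) (hh l j t0 :: repeat one k' ++ one :: map (hh l j) t'))
   with (pint pi (hh l j t0) * prodI (repeat pi k' ++ pi' :: repeat pi' k') (repeat one k' ++ one :: map (hh l j) t'))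
   by reflexivity.
  rewrite prodI_app by (rewrite !repeat_length; auto).
  rewrite prodI_one.
  replace (prodI (pi' :: repeat pi' k') (one :: map (hh l j) t'))
    with (pint pi' one * prodI (repeat pi' k') (map (hh l j) t')) by reflexivity.
  rewrite prodI_map by lia. unfold one; rewrite pint_one.
  change (fun b => pint pi (hh l j b)) with (aj pi l j).
  change (fun b => pint pi' (hh l j b)) with (aj pi' l j).
  unfold hd, tl. change (aj pi l j t0) with (pint pi (hh l j t0)). ring.
Qed.

Lemma aj_nonneg pi l j b : 0 <= aj pi l j b.
Proof.
  unfold aj. apply pint_pos. apply cont_hh.
  intros x Hx. unfold hh. apply Rmult_le_pos; apply pow_le; destruct b; simpl; lra.
Qed.

Lemma POS_holds k' : POS (S k').
Proof.
  intros pi pi' l _ _ Hl. unfold Epsi.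
  apply Rmult_le_pos. left; apply Rinv_0_lt_compat, pow_lt; lra.
  rewrite (sumR_ext_in _ (fun t => sumR (fun j => C l j * (prodR (aj pi l j) t + (INR (S k') - 1) * prodR (aj pi' l j) t
       - INR (S k') * (aj pi l j (hd true t) * prodR (aj pi' l j) (tl t)))) (seq 0 (S l)))).
  2:{ intros t Ht. apply iterI_t. apply cube_length; auto. }
  rewrite sumR_swap. apply sumR_nonneg. intros j _.
  rewrite sumR_scal. apply Rmult_le_pos. apply C_nonneg.
  rewrite sumR_minus, sumR_plus, !sumR_scal, !sum_prod_cube.
  rewrite cube_S. simpl hd. simpl tl. rewrite !sumR_scal, sum_prod_cube.
  set (A := aj pi l j true + aj pi l j false). set (B := aj pi' l j true + aj pi' l j false).
  replace (INR (S k') - 1) with (INR k') by (rewrite S_INR; ring).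
  replace (aj pi l j true * B ^ k' + aj pi l j false * B ^ k') with (A * B ^ k') by (unfold A; ring).
  replace (INR (S k') * (A * B ^ k')) with (INR (S k') * A * B ^ k') by ring.
  apply gk_ineq; unfold A, B; pose proof (aj_nonneg pi l j true); pose proof (aj_nonneg pi l j false);
    pose proof (aj_nonneg pi' l j true); pose proof (aj_nonneg pi' l j false); lra.
Qed.

Close Scope R_scope.

Lemma veq_dec (u v : vertex) : {u = v} + {u <> v}.
Proof. decide equality; apply Nat.eq_dec. Qed.

Lemma adj_sym cs u v : adj cs u v -> adj cs v u.
Proof. destruct u, v; simpl; auto. Qed.

Lemma adj_irrefl cs u : ~ adj cs u u.
Proof. destruct u; simpl; auto. Qed.

Fixpoint chain (cs : list constraint) (L : list vertex) : Prop :=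
  match L with
  | u :: ((w :: _) as L') => adj cs u w /\ chain cs L'
  | _ => True
  end.

Lemma chain_cons2 cs x y L : chain cs (x :: y :: L) <-> adj cs x y /\ chain cs (y :: L).
Proof. reflexivity. Qed.

Lemma chain_tl cs x L : chain cs (x :: L) -> chain cs L.
Proof. destruct L; [simpl; auto|]. rewrite chain_cons2. tauto. Qed.

Lemma chain_app_l cs L1 L2 : chain cs (L1 ++ L2) -> chain cs L1.
Proof.
  induction L1 as [|x L1 IH]; [simpl; auto|].
  destruct L1 as [|y L1]; [simpl; auto|].
  rewrite <- app_comm_cons, !chain_cons2. intros [H1 H2]. split; auto.
Qed.

Lemma chain_app_r cs L1 x L2 : chain cs (L1 ++ x :: L2) -> chain cs (x :: L2).
Proof.
  induction L1 as [|y L1 IH]; [simpl; auto|].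
  rewrite <- app_comm_cons. intros H. apply IH. eapply chain_tl; eauto.
Qed.

Lemma chain_snoc cs L x y : chain cs (L ++ [x]) -> adj cs x y -> chain cs (L ++ [x; y]).
Proof.
  induction L as [|z L IH]; intros H1 H2.
  - simpl; split; auto.
  - destruct L as [|z' L].
    + simpl in *. destruct H1; repeat split; auto.
    + simpl in H1 |- *. destruct H1 as [H3 H4]; split; auto.
      apply (IH H4 H2).
Qed.

Lemma chain_nth cs L d i : chain cs L -> (S i < length L)%nat -> adj cs (nth i L d) (nth (S i) L d).
Proof.
  revert i; induction L as [|x L IH]; intros i H Hi; simpl in Hi; [lia|].
  destruct L as [|y L]; simpl in Hi; [lia|]. rewrite chain_cons2 in H. destruct H as [H1 H2].
  destruct i; simpl; auto. apply (IH i H2). simpl; lia.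
Qed.

Lemma chain_rev cs L : chain cs L -> chain cs (rev L).
Proof.
  induction L as [|x L IH]; [simpl; auto|].
  destruct L as [|y L]; [simpl; auto|]. rewrite chain_cons2. intros [H1 H2].
  specialize (IH H2). simpl in IH |- *.
  replace ((rev L ++ [y]) ++ [x]) with (rev L ++ [y; x]) by (rewrite <- app_assoc; reflexivity).
  apply chain_snoc; auto. apply adj_sym; auto.
Qed.

Lemma mk_cycle cs u M w : NoDup (u :: M ++ [w]) -> chain cs (u :: M ++ [w]) -> M <> nil ->
  adj cs w u -> is_cycle cs (u :: M ++ [w]).
Proof.
  intros Hnd Hch HM Hwu. unfold is_cycle.
  assert (Hlen : length (u :: M ++ [w]) = S (S (length M))) by (simpl; rewrite length_app; simpl; lia).
  split; [rewrite Hlen; destruct M; [congruence|simpl; lia]|]. split; auto.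
  intros i Hi. rewrite Hlen in Hi |- *.
  destruct (Nat.eq_dec (S i) (S (S (length M)))).
  - rewrite e, Nat.mod_same by lia. injection e as e. subst i.
    simpl. rewrite app_nth2 by lia. rewrite Nat.sub_diag. simpl. exact Hwu.
  - rewrite Nat.mod_small by lia. apply chain_nth; auto. rewrite Hlen. lia.
Qed.

Lemma cycle_edge_in c u v : cycle_edge c u v -> In u c /\ In v c.
Proof.
  intros [i [Hi H]].
  assert (H0 : (0 < length c)%nat) by lia.
  assert (Hm : (S i mod length c < length c)%nat) by (apply Nat.mod_upper_bound; lia).
  destruct H as [[<- <-]|[<- <-]]; split; apply nth_In; auto.
Qed.

Lemma cycle_vertex_edge cs D x : is_cycle cs D -> In x D -> exists y, cycle_edge D x y.
Proof.
  intros [H3 _] Hx. apply (In_nth D x (VVar 0)) in Hx. destruct Hx as [i [Hi E]].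
  exists (nth (S i mod length D) D (VVar 0)). exists i. split; auto.
Qed.

Lemma uni_incl n cs C D : unicyclic n cs -> is_cycle cs C -> is_cycle cs D -> incl D C.
Proof.
  intros [_ [c [_ Hc]]] HC HD x Hx.
  destruct (cycle_vertex_edge cs D x HD Hx) as [y Hy].
  apply (Hc D HD) in Hy. apply (Hc C HC) in Hy. apply cycle_edge_in in Hy. tauto.
Qed.

Lemma uni_contra n cs C D x : unicyclic n cs -> is_cycle cs C -> is_cycle cs D ->
  In x D -> ~ In x C -> False.
Proof. intros. apply H3. eapply uni_incl; eauto. Qed.

Definition good (n : nat) (cs : list constraint) (S : list nat) (v : vertex) : Prop :=
  vvalid n cs v /\ match v with VCon a => In a S | VVar _ => True end.
Definition gpath n cs S (L : list vertex) := NoDup L /\ chain cs L /\ Forall (good n cs S) L.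
Definition longest n cs S L := gpath n cs S L /\ forall L', gpath n cs S L' -> (length L' <= length L)%nat.

Lemma gpath_rev n cs S L : gpath n cs S L -> gpath n cs S (rev L).
Proof.
  intros [H1 [H2 H3]]. split; [apply NoDup_rev; auto|]. split; [apply chain_rev; auto|].
  apply Forall_forall. intros x Hx. apply in_rev in Hx. rewrite Forall_forall in H3; auto.
Qed.

Lemma longest_rev n cs S L : longest n cs S L -> longest n cs S (rev L).
Proof.
  intros [H1 H2]. split; [apply gpath_rev; auto|]. rewrite length_rev; auto.
Qed.

Definition allV n (cs : list constraint) := map VVar (seq 0 n) ++ map VCon (seq 0 (length cs)).

Lemma gpath_bound n cs S L : gpath n cs S L -> (length L <= n + length cs)%nat.
Proof.
  intros [H1 [_ H3]].
  replace (n + length cs)%nat with (length (allV n cs)) by (unfold allV; rewrite length_app, !length_map, !length_seq; auto).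
  apply NoDup_incl_length; auto. intros v Hv. rewrite Forall_forall in H3. destruct (H3 v Hv) as [Hval _].
  unfold allV. apply in_or_app. destruct v; simpl in Hval; [left|right]; apply in_map; apply in_seq; lia.
Qed.

Lemma max_exists (P : list vertex -> Prop) N : (exists L, P L) -> (forall L, P L -> (length L <= N)%nat) ->
  exists L, P L /\ forall L', P L' -> (length L' <= length L)%nat.
Proof.
  intros [L0 H0] Hb.
  assert (forall m, forall L, P L -> (N - length L <= m)%nat -> exists L, P L /\ forall L', P L' -> (length L' <= length L)%nat).
  { induction m; intros L HL Hm.
    - exists L; split; auto. intros L' HL'. specialize (Hb L' HL'). lia.
    - destruct (classic (exists L', P L' /\ (length L < length L')%nat)) as [[L' [HL' Hlt]]|Hno].
      + apply (IHm L' HL'). specialize (Hb L' HL'). lia.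
      + exists L; split; auto. intros L' HL'. destruct (Nat.le_gt_cases (length L') (length L)); auto.
        exfalso; apply Hno; eauto. }
  apply (H (N - length L0)%nat L0 H0). lia.
Qed.

Lemma longest_exists n cs S L0 : gpath n cs S L0 -> exists L, longest n cs S L.
Proof.
  intros H. destruct (max_exists (gpath n cs S) (n + length cs)) as [L [H1 H2]]; eauto.
  apply gpath_bound. exists L; split; auto.
Qed.

Lemma adj_con_l cs a v : adj cs (VCon a) v -> exists x c, v = VVar x /\ nth_error cs a = Some c /\ In x (cvars c).
Proof. destruct v; simpl; [|tauto]. intros [c [H1 H2]]. eauto. Qed.

Lemma adj_var_l cs x v : adj cs (VVar x) v -> exists a c, v = VCon a /\ nth_error cs a = Some c /\ In x (cvars c).
Proof. destruct v; simpl; [tauto|]. intros [c [H1 H2]]. eauto. Qed.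

Lemma longest_ext n cs S u R w : longest n cs S (u :: R) -> adj cs u w -> good n cs S w -> In w R.
Proof.
  intros [[Hnd [Hch Hg]] Hmax] Hadj Hgw.
  destruct (classic (In w (u :: R))) as [Hin|Hout].
  - destruct Hin as [<-|Hin]; auto. exfalso; eapply adj_irrefl; eauto.
  - exfalso. assert (gpath n cs S (w :: u :: R)).
    { split; [constructor; auto|]. split. rewrite chain_cons2; split; auto. apply adj_sym; auto.
      constructor; auto. }
    apply Hmax in H. simpl in H. lia.
Qed.

Lemma NoDup_dup_false {A} (l l' : list A) a : NoDup (l ++ l') -> In a l -> In a l' -> False.
Proof.
  induction l as [|b l IH]; simpl; intros H1 H2 H3; [auto|].
  inversion H1; subst. destruct H2 as [<-|H2].
  - apply H4. apply in_or_app; right; auto.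
  - eapply IH; eauto.
Qed.

Lemma NoDup_pos_unique {A} (A1 B1 A2 B2 : list A) x : NoDup (A1 ++ x :: B1) ->
  A1 ++ x :: B1 = A2 ++ x :: B2 -> A1 = A2.
Proof.
  revert A2; induction A1 as [|a A1 IH]; intros A2 Hnd E; destruct A2 as [|a2 A2]; simpl in *; auto.
  - injection E as E1 E2. exfalso. apply NoDup_cons_iff in Hnd. apply (proj1 Hnd).
    rewrite E2. apply in_or_app; right; left; auto.
  - injection E as E1 E2. exfalso. apply NoDup_cons_iff in Hnd. apply (proj1 Hnd).
    rewrite <- E1. apply in_or_app; right; left; auto.
  - injection E as E1 E2. subst a2. f_equal. apply IH; auto. apply NoDup_cons_iff in Hnd. tauto.
Qed.

Lemma two_pos {A} (L A1 B1 A2 B2 : list A) x1 x2 : NoDup L -> L = A1 ++ x1 :: B1 -> L = A2 ++ x2 :: B2 ->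
  x1 <> x2 -> ~ In x2 A1 \/ ~ In x1 A2.
Proof.
  intros Hnd E1 E2 Hne. destruct (classic (In x2 A1)) as [H1|H1]; [|left; auto]. right. intros H2.
  apply in_split in H1. destruct H1 as [X [Y EX]]. subst A1.
  assert (X = A2).
  { apply (NoDup_pos_unique X (Y ++ x1 :: B1) A2 B2 x2).
    - rewrite <- app_assoc in E1. simpl in E1. rewrite <- E1. auto.
    - rewrite <- E2. rewrite E1. rewrite <- app_assoc. reflexivity. }
  subst A2. apply (NoDup_dup_false X (x2 :: Y ++ x1 :: B1) x1); auto.
  - rewrite E1 in Hnd. rewrite <- app_assoc in Hnd. exact Hnd.
  - right. apply in_or_app; right; left; auto.
Qed.

Lemma cyc_of_path n cs S u v1 A w B : gpath n cs S (u :: v1 :: A ++ w :: B) -> adj cs w u ->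
  is_cycle cs (u :: (v1 :: A) ++ [w]).
Proof.
  intros [Hnd [Hch _]] Hwu.
  assert (E : u :: v1 :: A ++ w :: B = (u :: (v1 :: A) ++ [w]) ++ B) by (simpl; rewrite <- app_assoc; reflexivity).
  apply mk_cycle; auto.
  - rewrite E in Hnd. eapply NoDup_app_remove_r; eauto.
  - rewrite E in Hch. eapply chain_app_l; eauto.
  - discriminate.
Qed.

Lemma pick1 (l : list nat) p q : NoDup l -> (3 <= length l)%nat -> exists x, In x l /\ VVar x <> p /\ VVar x <> q.
Proof.
  intros Hnd Hl. destruct l as [|a [|b [|c l]]]; simpl in Hl; try lia.
  apply NoDup_cons_iff in Hnd. destruct Hnd as [Ha Hnd]. apply NoDup_cons_iff in Hnd. destruct Hnd as [Hb _].
  assert (a <> b) by (intro; apply Ha; left; auto).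
  assert (a <> c) by (intro; apply Ha; right; left; auto).
  assert (b <> c) by (intro; apply Hb; left; auto).
  destruct (veq_dec (VVar a) p), (veq_dec (VVar a) q).
  - subst. exists b. split; [right; left; auto|]. split; congruence.
  - destruct (veq_dec (VVar b) q).
    + exists c. split; [right; right; left; auto|]. subst; split; congruence.
    + destruct (veq_dec (VVar b) p). subst; congruence.
      exists b; split; [right; left; auto|]. auto.
  - destruct (veq_dec (VVar b) p).
    + exists c. split; [right; right; left; auto|]. subst; split; congruence.
    + destruct (veq_dec (VVar b) q). subst; congruence.
      exists b; split; [right; left; auto|]. auto.
  - exists a; split; [left; auto|]. auto.
Qed.

Lemma pick2 (l : list nat) y : NoDup l -> (3 <= length l)%nat ->
  exists x1 x2, In x1 l /\ In x2 l /\ x1 <> x2 /\ x1 <> y /\ x2 <> y.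
Proof.
  intros Hnd Hl. destruct l as [|a [|b [|c l]]]; simpl in Hl; try lia.
  apply NoDup_cons_iff in Hnd. destruct Hnd as [Ha Hnd]. apply NoDup_cons_iff in Hnd. destruct Hnd as [Hb _].
  assert (a <> b) by (intro; apply Ha; left; auto).
  assert (a <> c) by (intro; apply Ha; right; left; auto).
  assert (b <> c) by (intro; apply Hb; left; auto).
  destruct (Nat.eq_dec a y).
  - exists b, c. subst. repeat split; simpl; auto.
  - destruct (Nat.eq_dec b y).
    + exists a, c. subst. repeat split; simpl; auto.
    + exists a, b. repeat split; simpl; auto.
Qed.

Definition NP (cs : list constraint) (S : list nat) : Prop :=
  forall a c, In a S -> nth_error cs a = Some c -> forall x, In x (cvars c) ->
    exists b c', In b S /\ b <> a /\ nth_error cs b = Some c' /\ In x (cvars c').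

Lemma con_info k n cs S a : csp_wf k n cs -> good n cs S (VCon a) ->
  exists c, nth_error cs a = Some c /\ length (cvars c) = k /\ NoDup (cvars c) /\
     (forall x, In x (cvars c) -> (x < n)%nat) /\ In a S.
Proof.
  intros Hwf [Hv HS]. simpl in Hv.
  exists (nth a cs {| ctau := nil; cvars := nil |}).
  assert (E : nth_error cs a = Some (nth a cs {| ctau := nil; cvars := nil |})) by (apply nth_error_nth'; auto).
  destruct (Hwf _ (nth_error_In _ _ E)) as [_ [H1 [H2 H3]]]. auto.
Qed.

Lemma good_var n cs S x : (x < n)%nat -> good n cs S (VVar x).
Proof. split; simpl; auto. Qed.

Lemma Lcon k n cs S a L : (3 <= k)%nat -> csp_wf k n cs -> unicyclic n cs ->
  longest n cs S (VCon a :: L) -> False.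
Proof.
  intros Hk Hwf Huni Hlong.
  pose proof Hlong as [[Hnd [Hch Hg]] Hmax].
  assert (Hga : good n cs S (VCon a)) by (rewrite Forall_forall in Hg; apply Hg; left; auto).
  destruct (con_info k n cs S a Hwf Hga) as [c [Hc [Hlen [Hndv [Hlt HaS]]]]].
  destruct L as [|v1 R].
  - destruct (cvars c) as [|y ys] eqn:Ev; [simpl in Hlen; lia|].
    assert (gpath n cs S [VCon a; VVar y]).
    { split. constructor. intros [E|[]]; discriminate. constructor; [intros []|constructor].
      assert (adj cs (VCon a) (VVar y)) by (simpl; exists c; split; auto; rewrite Ev; left; auto).
      split. rewrite chain_cons2. split; simpl; auto.
      constructor; [exact Hga|constructor; [apply good_var; apply Hlt; left; auto|constructor]]. }
    apply Hmax in H. simpl in H. lia.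
  - assert (Hav1 : adj cs (VCon a) v1) by (rewrite chain_cons2 in Hch; tauto).
    destruct (adj_con_l cs a v1 Hav1) as [y [c0 [-> _]]].
    destruct (pick2 (cvars c) y Hndv ltac:(lia)) as [x1 [x2 [Hx1 [Hx2 [H12 [H1y H2y]]]]]].
    assert (Hin : forall x, In x (cvars c) -> x <> y -> In (VVar x) R).
    { intros x Hx Hxy. assert (In (VVar x) (VVar y :: R)).
      { eapply longest_ext; eauto. simpl. exists c; auto. apply good_var; auto. }
      destruct H as [E|H]; auto. injection E; intros; congruence. }
    assert (In1 := Hin x1 Hx1 H1y). assert (In2 := Hin x2 Hx2 H2y).
    apply in_split in In1. apply in_split in In2.
    destruct In1 as [A1 [B1 E1]]. destruct In2 as [A2 [B2 E2]].
    assert (HndR : NoDup R) by (inversion Hnd; subst; inversion H2; auto).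
    assert (Hneq : VVar x1 <> VVar x2) by congruence.
    assert (Hadj : forall x, In x (cvars c) -> adj cs (VVar x) (VCon a)) by (intros; simpl; exists c; auto).
    assert (HC1 : is_cycle cs (VCon a :: (VVar y :: A1) ++ [VVar x1])).
    { apply (cyc_of_path n cs S _ _ _ _ B1); auto. rewrite <- E1. apply Hlong. }
    assert (HC2 : is_cycle cs (VCon a :: (VVar y :: A2) ++ [VVar x2])).
    { apply (cyc_of_path n cs S _ _ _ _ B2); auto. rewrite <- E2. apply Hlong. }
    destruct (two_pos R A1 B1 A2 B2 _ _ HndR E1 E2 Hneq) as [N|N].
    + apply (uni_contra n cs _ _ (VVar x2) Huni HC1 HC2).
      * simpl. right; right. apply in_or_app. right; left; auto.
      * simpl. intros [E|[E|E]]; try discriminate; try congruence.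
        apply in_app_or in E; destruct E as [E|[E|[]]]; [contradiction|congruence].
    + apply (uni_contra n cs _ _ (VVar x1) Huni HC2 HC1).
      * simpl. right; right. apply in_or_app. right; left; auto.
      * simpl. intros [E|[E|E]]; try discriminate; try congruence.
        apply in_app_or in E; destruct E as [E|[E|[]]]; [contradiction|congruence].
Qed.

Lemma gpath_tl n cs S u L : gpath n cs S (u :: L) -> gpath n cs S L.
Proof.
  intros [H1 [H2 H3]]. split; [inversion H1; auto|]. split; [eapply chain_tl; eauto|]. inversion H3; auto.
Qed.

Lemma good_of n cs S L v : gpath n cs S L -> In v L -> good n cs S v.
Proof. intros [_ [_ H]] Hv. rewrite Forall_forall in H. auto. Qed.

Lemma Lvar_cycle n cs S x v1 R : NP cs S -> longest n cs S (VVar x :: v1 :: R) ->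
  exists A w B, R = A ++ w :: B /\ adj cs w (VVar x) /\ is_cycle cs (VVar x :: (v1 :: A) ++ [w]).
Proof.
  intros Hnp Hlong. pose proof Hlong as [Hp Hmax].
  assert (Hav1 : adj cs (VVar x) v1) by (destruct Hp as [_ [Hch _]]; rewrite chain_cons2 in Hch; tauto).
  destruct (adj_var_l cs x v1 Hav1) as [a [c [-> [Hc Hx]]]].
  assert (Hg1 : good n cs S (VCon a)) by (eapply good_of; eauto; right; left; auto).
  destruct Hg1 as [_ HaS].
  destruct (Hnp a c HaS Hc x Hx) as [b [c' [HbS [Hba [Hc' Hx']]]]].
  assert (Hxw : adj cs (VVar x) (VCon b)) by (simpl; exists c'; auto).
  assert (Hgw : good n cs S (VCon b)).
  { split; auto. simpl. apply nth_error_Some. congruence. }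
  assert (HinR : In (VCon b) R).
  { assert (In (VCon b) (VCon a :: R)) by (eapply longest_ext; eauto).
    destruct H as [E|E]; auto. injection E; intros; congruence. }
  apply in_split in HinR. destruct HinR as [A [B E]].
  exists A, (VCon b), B. split; auto. split; [apply adj_sym; auto|].
  apply (cyc_of_path n cs S _ _ _ _ B); [|apply adj_sym; auto]. rewrite <- E. exact Hp.
Qed.

Lemma NoDup_snoc {A} (z : A) L : NoDup (z :: L) -> NoDup (L ++ [z]).
Proof.
  intros H. inversion H; subst. apply NoDup_app; auto. constructor; [intros []|constructor].
  intros a Ha [E|[]]; subst; auto.
Qed.

Lemma Lvar k n cs S x v1 R : (3 <= k)%nat -> csp_wf k n cs -> unicyclic n cs -> NP cs S ->
  longest n cs S (VVar x :: v1 :: R) -> False.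
Proof.
  intros Hk Hwf Huni Hnp Hlong.
  destruct (Lvar_cycle n cs S x v1 R Hnp Hlong) as [A [w [B [ER [Hwx HC1]]]]].
  pose proof Hlong as [Hp Hmax].
  destruct B as [|b0 B'].
  -
    assert (Hav1 : adj cs (VVar x) v1) by (destruct Hp as [_ [Hch _]]; rewrite chain_cons2 in Hch; tauto).
    destruct (adj_var_l cs x v1 Hav1) as [a [c0 [Ev1 _]]]. subst v1.
    assert (Hga : good n cs S (VCon a)) by (eapply good_of; eauto; right; left; auto).
    destruct (con_info k n cs S a Hwf Hga) as [c [Hc [Hlen [Hndv [Hlt HaS]]]]].
    assert (ET : exists v2 T', A ++ [w] = v2 :: T') by (destruct A; simpl; eauto).
    destruct ET as [v2 [T' ET]].
    destruct (pick1 (cvars c) (VVar x) v2 Hndv ltac:(lia)) as [y [Hy [Hyx Hy2]]].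
    assert (Hay : adj cs (VCon a) (VVar y)) by (simpl; exists c; auto).
    subst R.
    assert (Hnd : NoDup (VVar x :: VCon a :: A ++ [w])) by apply Hp.
    destruct (classic (In (VVar y) (VVar x :: VCon a :: A ++ [w]))) as [Hin|Hout].
    + destruct Hin as [E|[E|Hin]]; try congruence.
      rewrite ET in Hin. destruct Hin as [E|Hin]; [congruence|].
      apply in_split in Hin. destruct Hin as [A3 [B3 E3]].
      assert (Hp2 : gpath n cs S (VCon a :: v2 :: A3 ++ VVar y :: B3)).
      { rewrite <- E3, <- ET. eapply gpath_tl; eauto. }
      assert (HC3 := cyc_of_path n cs S _ _ _ _ _ Hp2 (adj_sym _ _ _ Hay)).
      apply (uni_contra n cs _ _ (VVar x) Huni HC3 HC1); [left; auto|].
      intros Hin. apply NoDup_cons_iff in Hnd. apply (proj1 Hnd).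
      rewrite ET, E3. simpl in Hin |- *. destruct Hin as [E|[E|Hin]]; [left; auto|right; left; auto|].
      right; right. apply in_app_or in Hin. apply in_or_app. destruct Hin as [Hin|[E|[]]]; [left; auto|].
      right; left; auto.
    + assert (Hq : gpath n cs S (VVar y :: VCon a :: A ++ [w; VVar x])).
      { split; [|split].
        - constructor. intros Hin. apply Hout. simpl in Hin |- *.
          destruct Hin as [E|Hin]; [right; left; auto|]. right; right.
          apply in_app_or in Hin. destruct Hin as [Hin|[E|[E|[]]]].
          apply in_or_app; left; auto. apply in_or_app; right; left; auto. congruence.
          replace (VCon a :: A ++ [w; VVar x]) with ((VCon a :: A ++ [w]) ++ [VVar x])
            by (simpl; rewrite <- app_assoc; reflexivity).
          apply NoDup_snoc; auto.
        - rewrite chain_cons2. split; [apply adj_sym; auto|].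
          destruct Hp as [_ [Hch _]]. apply chain_tl in Hch.
          change (chain cs ((VCon a :: A) ++ [w; VVar x])). apply chain_snoc; auto.
        - constructor. apply good_var; auto.
          apply Forall_forall. intros v Hv. apply (good_of n cs S (VVar x :: VCon a :: A ++ [w])); auto.
          simpl in Hv |- *. destruct Hv as [E|Hv]; [right; left; auto|].
          apply in_app_or in Hv. destruct Hv as [Hv|[E|[E|[]]]].
          right; right; apply in_or_app; left; auto. right; right; apply in_or_app; right; left; auto.
          left; auto. }
      apply Hmax in Hq. simpl in Hq. rewrite !length_app in Hq. simpl in Hq. lia.
  -
    assert (HB : b0 :: B' <> []) by discriminate.
    destruct (exists_last HB) as [B0 [z EB]].
    rewrite EB in ER. subst R.
    assert (EP : VVar x :: v1 :: A ++ w :: B0 ++ [z] = (VVar x :: v1 :: A ++ w :: B0) ++ [z])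
      by (simpl; rewrite <- app_assoc; reflexivity).
    assert (Hzn : ~ In z (VVar x :: (v1 :: A) ++ [w])).
    { intros Hin. destruct Hp as [Hnd _]. rewrite EP in Hnd.
      apply (NoDup_dup_false _ _ z Hnd); [|left; auto].
      simpl in Hin |- *. destruct Hin as [E|[E|Hin]]; [left; auto|right; left; auto|].
      right; right. apply in_app_or in Hin. apply in_or_app. destruct Hin as [Hin|[E|[]]]; [left; auto|right; left; auto]. }
    assert (Hrev := longest_rev _ _ _ _ Hlong). rewrite EP, rev_unit in Hrev.
    set (L' := rev (VVar x :: v1 :: A ++ w :: B0)) in Hrev.
    assert (EL : exists v1' R', L' = v1' :: R').
    { unfold L'. simpl. rewrite <- app_assoc. destruct (rev (A ++ w :: B0)); simpl; eauto. }
    destruct EL as [v1' [R' EL]]. rewrite EL in Hrev.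
    destruct z as [x'|b].
    + destruct (Lvar_cycle n cs S x' v1' R' Hnp Hrev) as [A' [w' [B2 [_ [_ HC2]]]]].
      apply (uni_contra n cs _ _ (VVar x') Huni HC1 HC2); [left; auto|auto].
    + apply (Lcon k n cs S b (v1' :: R') Hk Hwf Huni Hrev).
Qed.

Lemma noPriv_contra k n cs S a0 : (3 <= k)%nat -> csp_wf k n cs -> unicyclic n cs ->
  In a0 S -> (a0 < length cs)%nat -> NP cs S -> False.
Proof.
  intros Hk Hwf Huni Ha0 Hlt0 Hnp.
  assert (Hga : good n cs S (VCon a0)) by (split; simpl; auto).
  destruct (con_info k n cs S a0 Hwf Hga) as [c [Hc [Hlen [Hndv [Hlt HaS]]]]].
  destruct (cvars c) as [|y ys] eqn:Ev; [simpl in Hlen; lia|].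
  assert (Hp2 : gpath n cs S [VCon a0; VVar y]).
  { split. constructor. intros [E|[]]; discriminate. constructor; [intros []|constructor].
    assert (adj cs (VCon a0) (VVar y)) by (simpl; exists c; split; auto; rewrite Ev; left; auto).
    split. rewrite chain_cons2. split; simpl; auto.
    constructor; [exact Hga|constructor; [apply good_var; apply Hlt; left; auto|constructor]]. }
  destruct (longest_exists n cs S _ Hp2) as [P HP].
  pose proof HP as [_ Hmax]. specialize (Hmax _ Hp2). simpl in Hmax.
  destruct P as [|u [|v1 R]]; simpl in Hmax; try lia.
  destruct u as [x|a].
  - eapply Lvar; eauto.
  - eapply Lcon; eauto.
Qed.

Definition upd (sg : nat -> Omega) (x : nat) (b : Omega) : nat -> Omega :=
  fun y => if Nat.eq_dec y x then b else sg y.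

Lemma nth_map' {A B} (f : A -> B) l q d d0 : (q < length l)%nat -> nth q (map f l) d = f (nth q l d0).
Proof. intros H. rewrite (nth_indep _ d (f d0)) by (rewrite length_map; auto). apply map_nth. Qed.

Lemma psi_pos tau s : s <> tau -> s <> map negb tau -> (0 < psi tau s)%R.
Proof.
  intros H1 H2. unfold psi. destruct (eqL s tau); [congruence|]. destruct (eqL s (map negb tau)); [congruence|]. lra.
Qed.

Lemma nae_fix (tau : list Omega) (vars : list nat) sg x : length tau = length vars -> (2 <= length vars)%nat ->
  NoDup vars -> In x vars -> exists bv, (0 < psi tau (map (upd sg x bv) vars))%R.
Proof.
  intros Hl H2 Hnd Hx.
  destruct (classic (exists bv, (0 < psi tau (map (upd sg x bv) vars))%R)) as [H|H]; auto. exfalso.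
  assert (Hb : forall bv, map (upd sg x bv) vars = tau \/ map (upd sg x bv) vars = map negb tau).
  { intros bv. destruct (classic (map (upd sg x bv) vars = tau)); auto.
    destruct (classic (map (upd sg x bv) vars = map negb tau)); auto.
    exfalso; apply H. exists bv. apply psi_pos; auto. }
  apply (In_nth vars x 0%nat) in Hx. destruct Hx as [p [Hp Ep]].
  set (q := if Nat.eq_dec p 0 then 1%nat else 0%nat).
  assert (Hq : (q < length vars)%nat) by (unfold q; destruct (Nat.eq_dec p 0); lia).
  assert (Hqp : q <> p) by (unfold q; destruct (Nat.eq_dec p 0); lia).
  assert (Hnq : nth q vars 0%nat <> x).
  { intros E. apply Hqp. rewrite <- Ep in E. apply (NoDup_nth vars 0%nat) in E; auto. }
  assert (Ep' : forall bv, nth p (map (upd sg x bv) vars) true = bv).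
  { intros bv. rewrite (nth_map' _ _ _ _ 0%nat) by auto. rewrite Ep. unfold upd. destruct (Nat.eq_dec x x); congruence. }
  assert (Eq' : forall bv, nth q (map (upd sg x bv) vars) true = sg (nth q vars 0%nat)).
  { intros bv. rewrite (nth_map' _ _ _ _ 0%nat) by auto. unfold upd. destruct (Nat.eq_dec _ x); congruence. }
  assert (Hneg : forall i, (i < length tau)%nat -> nth i (map negb tau) true = negb (nth i tau true))
    by (intros; apply nth_map_negb; auto).
  pose proof (Ep' true) as Et. pose proof (Ep' false) as Ef.
  pose proof (Eq' true) as Qt. pose proof (Eq' false) as Qf.
  destruct (Hb true) as [T|T]; destruct (Hb false) as [F|F]; rewrite T in Et, Qt; rewrite F in Ef, Qf.
  - congruence.
  - rewrite Hneg in Qf by lia. rewrite <- Qt in Qf. destruct (nth q tau true); discriminate.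
  - rewrite Hneg in Qt by lia. rewrite <- Qf in Qt. destruct (nth q tau true); discriminate.
  - congruence.
Qed.

Lemma NoDup_remove_nat (S : list nat) a : NoDup S -> NoDup (remove Nat.eq_dec a S).
Proof.
  induction S as [|b S IH]; simpl; intros H; [constructor|].
  inversion H; subst. destruct (Nat.eq_dec a b); auto.
  constructor; auto. intros Hin. apply in_remove in Hin. tauto.
Qed.

Lemma sat k n cs : (3 <= k)%nat -> csp_wf k n cs -> unicyclic n cs ->
  forall m S, (length S <= m)%nat -> NoDup S -> (forall a, In a S -> (a < length cs)%nat) ->
  exists sg : nat -> Omega, forall a c, In a S -> nth_error cs a = Some c -> (0 < psi (ctau c) (map sg (cvars c)))%R.
Proof.
  intros Hk Hwf Huni. induction m; intros S HlS Hnd HS.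
  - destruct S; [|simpl in HlS; lia]. exists (fun _ => true). intros a c [].
  - destruct S as [|a0 S0]. exists (fun _ => true). intros a c [].
    destruct (classic (exists a c x, In a (a0 :: S0) /\ nth_error cs a = Some c /\ In x (cvars c) /\
        forall b c', In b (a0 :: S0) -> b <> a -> nth_error cs b = Some c' -> ~ In x (cvars c'))) as [Hpriv|Hno].
    2:{ exfalso. apply (noPriv_contra k n cs (a0 :: S0) a0 Hk Hwf Huni); [left; auto|apply HS; left; auto|].
        intros a c Ha Hc x Hx. apply NNPP. intros Hn. apply Hno. exists a, c, x. repeat split; auto.
        intros b c' Hb Hba Hc' Hin. apply Hn. exists b, c'. auto. }
    destruct Hpriv as [a [c [x [Ha [Hc [Hx Hpr]]]]]].
    set (S' := remove Nat.eq_dec a (a0 :: S0)).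
    assert (HlS' : (length S' <= m)%nat).
    { unfold S'. pose proof (remove_length_lt Nat.eq_dec (a0 :: S0) a Ha). simpl in *. lia. }
    destruct (IHm S' HlS' (NoDup_remove_nat _ _ Hnd)) as [sg' Hsg'].
    { intros b Hb. apply in_remove in Hb. apply HS; tauto. }
    destruct (Hwf c (nth_error_In _ _ Hc)) as [Hl1 [Hl2 [Hnd2 _]]].
    destruct (nae_fix (ctau c) (cvars c) sg' x) as [bv Hbv]; auto; try lia.
    exists (upd sg' x bv). intros b c' Hb Hc'.
    destruct (Nat.eq_dec b a).
    + subst b. rewrite Hc in Hc'. injection Hc' as <-. auto.
    + assert (Hx' : ~ In x (cvars c')) by (apply (Hpr b c'); auto).
      rewrite (map_ext_in (upd sg' x bv) sg').
      * apply (Hsg' b c'); auto. unfold S'. apply in_in_remove; auto.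
      * intros y Hy. unfold upd. destruct (Nat.eq_dec y x); auto. subst; contradiction.
Qed.

Lemma prodR_pos {A} (f : A -> R) l : (forall x, In x l -> (0 < f x)%R) -> (0 < prodR f l)%R.
Proof.
  induction l; intros H; simpl. lra. apply Rmult_lt_0_compat. apply H; left; auto.
  apply IHl; intros; apply H; right; auto.
Qed.

Lemma UNI_holds k : (3 <= k)%nat -> UNI k.
Proof.
  intros Hk n cs Hwf Huni.
  destruct (sat k n cs Hk Hwf Huni (length cs) (seq 0 (length cs))) as [sg Hsg].
  rewrite length_seq; auto. apply seq_NoDup. intros a Ha; apply in_seq in Ha; lia.
  exists sg. apply prodR_pos. intros c Hc.
  destruct (In_nth cs c {| ctau := nil; cvars := nil |} Hc) as [a [Ha Ea]].
  apply (Hsg a c). apply in_seq; lia. rewrite <- Ea. apply nth_error_nth'; auto.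
Qed.

Theorem mainTheorem13 : forall k : nat, (3 <= k)%nat ->
  SYM k /\ BAL k /\ MIN k /\ POS k /\ UNI k.
Proof.
  intros k Hk.
  split; [apply SYM_holds; lia|].
  split; [apply BAL_holds|].
  split; [apply MIN_holds; lia|].
  split; [destruct k; [lia|apply POS_holds]|].
  apply UNI_holds; auto.
Qed.
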